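(* Every exact-repair regenerating code of type $(5,4,4)$ with parameters $(B,\alpha,\beta)$ satisfies \[ 5B\le 7\alpha+22\beta\;(=3B_1+2B_2-2\beta). \]
   Context: Fix integers $1\le k\le d\le n-1$. An exact-repair regenerating code of type $(n,k,d)$ with parameters $(B,\alpha,\beta)$ (nonnegative reals) is a collection of jointly distributed discrete random variables $M$, $W_j$ ($1\le j\le n$), $S_i^j$ ($1\le i,j\le n$, $i\neq j$) such that, with $H$ denoting Shannon entropy: $H(M)=B$; $H(W_j)=\alpha$ and $H(W_j\mid M)=0$ for all $j$; $H(M\mid W_J)=0$ for every $J\subseteq\{1,\dots,n\}$ with $|J|\ge k$; $H(S_i^j)=\beta$ and $H(S_i^j\mid W_i)=0$ for all $i\ne j$; and $H(W_j\mid S_I^j)=0$ for every $I\subseteq\{1,\dots,n\}\setminus\{j\}$ with $|I|\ge d$. Notation: for a set $J$, $W_J=(W_j)_{j\in J}$; $S_I^j=(S_i^j)_{i\in I}$. For $0\le q\le k$, $B_q=q\alpha+\binom{k-q}{2}\beta+(d+1-k)(k-q)\beta$; for $(n,k,d)=(5,4,4)$, $B_1=\alpha+6\beta$, $B_2=2\alpha+3\beta$. *)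

(* Defs.v *)
From Stdlib Require Import Reals List ClassicalEpsilon.
Open Scope R_scope.

(* A discrete probability space: WLOG the sample space is countable, taken to be nat,
   with point masses p. *)
Definition prob_space (p : nat -> R) : Prop :=
  (forall w, 0 <= p w) /\ infinite_sum p 1.

(* A discrete random variable, with values encoded in nat. *)
Definition RV := nat -> nat.

Definition jv (Xs : list RV) (w : nat) : list nat := map (fun X => X w) Xs.

Definition sumR (u : nat -> R) : R :=
  epsilon (inhabits 0) (fun l => infinite_sum u l).

Definition Pr (p : nat -> R) (Xs : list RV) (w : nat) : R :=
  sumR (fun w' => if list_eq_dec Nat.eq_dec (jv Xs w') (jv Xs w) then p w' else 0).

Definition entropy (p : nat -> R) (Xs : list RV) (h : R) : Prop :=
  infinite_sum (fun w => p w * - ln (Pr p Xs w)) h.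

Definition cond_entropy (p : nat -> R) (Xs Ys : list RV) (h : R) : Prop :=
  infinite_sum (fun w => p w * - ln (Pr p (Xs ++ Ys) w / Pr p Ys w)) h.

(* J is a subset of the node index set {0,...,n-1} (nodes 1..n of the paper, shifted). *)
Definition subset_idx (n : nat) (J : list nat) : Prop :=
  NoDup J /\ (forall j, In j J -> (j < n)%nat).

Definition regen_code (n k d : nat) (p : nat -> R) (M : RV) (W : nat -> RV)
    (S : nat -> nat -> RV) (B alpha beta : R) : Prop :=
  entropy p (M :: nil) B /\
  (forall j, (j < n)%nat -> entropy p (W j :: nil) alpha) /\
  (forall j, (j < n)%nat -> cond_entropy p (W j :: nil) (M :: nil) 0) /\
  (forall J, subset_idx n J -> (k <= length J)%nat ->
      cond_entropy p (M :: nil) (map W J) 0) /\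
  (forall i j, (i < n)%nat -> (j < n)%nat -> i <> j ->
      entropy p (S i j :: nil) beta) /\
  (forall i j, (i < n)%nat -> (j < n)%nat -> i <> j ->
      cond_entropy p (S i j :: nil) (W i :: nil) 0) /\
  (forall j I, (j < n)%nat -> subset_idx n I -> ~ In j I -> (d <= length I)%nat ->
      cond_entropy p (W j :: nil) (map (fun i => S i j) I) 0).

(* Main.v *)
Require Import Defs.
From Stdlib Require Import Reals List.
From Stdlib Require Import Lra Lia ClassicalEpsilon Classical FunctionalExtensionality.
Open Scope R_scope.
Import ListNotations.

Lemma psum_mono (f : nat -> R) : (forall n, 0 <= f n) ->
  forall m n, (m <= n)%nat -> sum_f_R0 f m <= sum_f_R0 f n.
Proof.
  intros Hf m n Hmn. induction Hmn. lra.
  rewrite tech5. specialize (Hf (S m0)). lra.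
Qed.

Lemma psum_le_lim (f : nat -> R) l : (forall n, 0 <= f n) -> infinite_sum f l ->
  forall n, sum_f_R0 f n <= l.
Proof.
  intros Hf Hl n. destruct (Rle_dec (sum_f_R0 f n) l) as [H|H]; auto.
  exfalso. apply Rnot_le_lt in H.
  destruct (Hl (sum_f_R0 f n - l)) as [N HN]; [lra|].
  specialize (HN (max N n) (Nat.le_max_l _ _)).
  assert (sum_f_R0 f n <= sum_f_R0 f (max N n)) by (apply psum_mono; auto; lia).
  unfold R_dist in HN. apply Rabs_def2 in HN. lra.
Qed.

Lemma term_le_lim (f : nat -> R) l : (forall n, 0 <= f n) -> infinite_sum f l ->
  forall k, f k <= l.
Proof.
  intros Hf Hl k. apply Rle_trans with (sum_f_R0 f k); [|apply psum_le_lim; auto].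
  destruct k. simpl; lra. rewrite tech5.
  assert (0 <= sum_f_R0 f k) by (apply cond_pos_sum; auto). lra.
Qed.

Lemma conv_bounded (f : nat -> R) K : (forall n, 0 <= f n) ->
  (forall n, sum_f_R0 f n <= K) -> exists l, infinite_sum f l.
Proof.
  intros Hf HK.
  destruct (growing_cv (sum_f_R0 f)) as [l Hl].
  - intros n. rewrite tech5. specialize (Hf (S n)). lra.
  - exists K. intros x [n ->]. auto.
  - exists l. exact Hl.
Qed.

Lemma sumR_spec (f : nat -> R) : (exists l, infinite_sum f l) -> infinite_sum f (sumR f).
Proof.
  intros H. unfold sumR. apply epsilon_spec. exact H.
Qed.

Lemma sumR_eq (f : nat -> R) l : infinite_sum f l -> sumR f = l.
Proof.
  intros H. apply uniqueness_sum with f; auto. apply sumR_spec. eauto.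
Qed.

Lemma lim_le (f g : nat -> R) a b : (forall n, f n <= g n) ->
  infinite_sum f a -> infinite_sum g b -> a <= b.
Proof.
  intros H Ha Hb. apply (Rle_cv_lim (Un := sum_f_R0 f) (Vn := sum_f_R0 g)); auto.
  intros n. apply sum_Rle. auto.
Qed.

Lemma lim_plus (f g : nat -> R) a b :
  infinite_sum f a -> infinite_sum g b -> infinite_sum (fun n => f n + g n) (a + b).
Proof.
  intros Ha Hb. assert (H := CV_plus _ _ _ _ Ha Hb).
  intros e He. destruct (H e He) as [N HN]. exists N. intros n Hn.
  rewrite sum_plus. apply HN; auto.
Qed.

Lemma lim_minus (f g : nat -> R) a b :
  infinite_sum f a -> infinite_sum g b -> infinite_sum (fun n => f n - g n) (a - b).
Proof.
  intros Ha Hb. assert (H := CV_minus _ _ _ _ Ha Hb).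
  intros e He. destruct (H e He) as [N HN]. exists N. intros n Hn.
  rewrite minus_sum. apply HN; auto.
Qed.

Lemma lim_ext (f g : nat -> R) a : (forall n, f n = g n) -> infinite_sum f a -> infinite_sum g a.
Proof.
  intros H Ha e He. destruct (Ha e He) as [N HN]. exists N. intros n Hn.
  replace (sum_f_R0 g n) with (sum_f_R0 f n). auto.
  clear -H. induction n; simpl; rewrite ?IHn, ?H; auto.
Qed.

Lemma lim_scal (f : nat -> R) a c : infinite_sum f a -> infinite_sum (fun n => c * f n) (c * a).
Proof.
  intros Ha. assert (Hc : Un_cv (fun _ => c) c).
  { intros e He. exists 0%nat. intros. unfold R_dist. rewrite Rminus_diag, Rabs_R0. lra. }
  assert (H := CV_mult _ _ _ _ Hc Ha).
  intros e He. destruct (H e He) as [N HN]. exists N. intros n Hn.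
  replace (sum_f_R0 (fun n0 => c * f n0) n) with (c * sum_f_R0 f n).
  apply HN; auto. rewrite scal_sum. apply sum_eq. intros; ring.
Qed.


Definition ind (P : Prop) (x : R) : R := if excluded_middle_informative P then x else 0.
Definition Qm (p : nat -> R) (E : nat -> Prop) : R := sumR (fun w => ind (E w) (p w)).

Lemma ind_T (P : Prop) x : P -> ind P x = x.
Proof. intros H. unfold ind. destruct (excluded_middle_informative P); tauto. Qed.
Lemma ind_F (P : Prop) x : ~ P -> ind P x = 0.
Proof. intros H. unfold ind. destruct (excluded_middle_informative P); tauto. Qed.
Lemma ind_bounds (P : Prop) x : 0 <= x -> 0 <= ind P x <= x.
Proof. intros H. unfold ind. destruct (excluded_middle_informative P); lra. Qed.

Lemma p_psum_le1 p : prob_space p -> forall n, sum_f_R0 p n <= 1.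
Proof. intros [H0 H1] n. apply psum_le_lim; auto. Qed.

Lemma Qm_conv p E : prob_space p -> infinite_sum (fun w => ind (E w) (p w)) (Qm p E).
Proof.
  intros Hp. unfold Qm. apply sumR_spec. apply conv_bounded with 1.
  - intros n. apply ind_bounds. apply Hp.
  - intros n. apply Rle_trans with (sum_f_R0 p n); [|apply p_psum_le1; auto].
    apply sum_Rle. intros. apply ind_bounds. apply Hp.
Qed.

Lemma Qm_psum p E n : prob_space p -> sum_f_R0 (fun w => ind (E w) (p w)) n <= Qm p E.
Proof. intros Hp. apply psum_le_lim; [|apply Qm_conv; auto]. intros; apply ind_bounds, Hp. Qed.

Lemma Qm_ge_term p (E : nat -> Prop) w : prob_space p -> E w -> p w <= Qm p E.
Proof.
  intros Hp Hw. rewrite <- (ind_T (E w) (p w)) by auto.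
  apply (term_le_lim (fun w => ind (E w) (p w))); [|apply Qm_conv; auto].
  intros; apply ind_bounds, Hp.
Qed.

Lemma Qm_nonneg p E : prob_space p -> 0 <= Qm p E.
Proof.
  intros Hp. apply Rle_trans with (sum_f_R0 (fun w => ind (E w) (p w)) 0); [|apply Qm_psum; auto].
  simpl. apply ind_bounds, Hp.
Qed.

Lemma Qm_le1 p E : prob_space p -> Qm p E <= 1.
Proof.
  intros Hp. apply (lim_le (fun w => ind (E w) (p w)) p); [|apply Qm_conv; auto|apply Hp].
  intros; apply ind_bounds, Hp.
Qed.

Lemma Qm_mono p (E E' : nat -> Prop) : prob_space p ->
  (forall w, 0 < p w -> E w -> E' w) -> Qm p E <= Qm p E'.
Proof.
  intros Hp H. apply (lim_le (fun w => ind (E w) (p w)) (fun w => ind (E' w) (p w)));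
  [|apply Qm_conv; auto|apply Qm_conv; auto].
  intros w. destruct (proj1 Hp w) as [Hw|Hw].
  - unfold ind. destruct (excluded_middle_informative (E w)), (excluded_middle_informative (E' w)); try lra.
    exfalso; auto.
  - rewrite <- Hw. unfold ind. destruct (excluded_middle_informative (E w)), (excluded_middle_informative (E' w)); lra.
Qed.

Lemma Qm_ext p (E E' : nat -> Prop) : prob_space p ->
  (forall w, 0 < p w -> (E w <-> E' w)) -> Qm p E = Qm p E'.
Proof.
  intros Hp H. apply Rle_antisym; apply Qm_mono; auto; intros w Hw; apply H; auto.
Qed.

Lemma Qm_strict p (E E' : nat -> Prop) w0 : prob_space p ->
  (forall w, E w -> E' w) -> E' w0 -> ~ E w0 -> Qm p E + p w0 <= Qm p E'.
Proof.
  intros Hp H H1 H2.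
  assert (Hs := lim_plus _ _ _ _ (Qm_conv p E Hp) (Qm_conv p (fun w => E' w /\ ~ E w) Hp)).
  assert (Heq : forall w, ind (E w) (p w) + ind (E' w /\ ~ E w) (p w) = ind (E' w) (p w)).
  { intros w. unfold ind.
    destruct (excluded_middle_informative (E w)), (excluded_middle_informative (E' w /\ ~ E w)),
      (excluded_middle_informative (E' w)); try lra; exfalso; firstorder. }
  apply lim_ext with (g := fun w => ind (E' w) (p w)) in Hs; auto.
  rewrite (uniqueness_sum _ _ _ (Qm_conv p E' Hp) Hs).
  assert (p w0 <= Qm p (fun w => E' w /\ ~ E w)) by (apply Qm_ge_term; auto).
  lra.
Qed.

Lemma Qm_True p : prob_space p -> Qm p (fun _ => True) = 1.
Proof.
  intros Hp. apply uniqueness_sum with (fun w => ind True (p w)).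
  apply Qm_conv; auto. apply lim_ext with p. intros; rewrite ind_T; auto. apply Hp.
Qed.

Definition agree (L : list RV) (w w' : nat) : Prop := forall Z, In Z L -> Z w' = Z w.

Lemma jv_eq_iff L w w' : jv L w' = jv L w <-> agree L w w'.
Proof.
  unfold agree, jv. induction L as [|X L IH]; simpl; split.
  - intros _ Z [].
  - auto.
  - intros H. injection H as H1 H2. intros Z [<-|HZ]; auto. apply IH; auto.
  - intros H. f_equal. apply H; auto. apply IH. intros; apply H; auto.
Qed.

Lemma Pr_Qm p L w : Pr p L w = Qm p (agree L w).
Proof.
  unfold Pr, Qm. f_equal. apply functional_extensionality. intros w'.
  destruct (list_eq_dec Nat.eq_dec (jv L w') (jv L w)) as [e|n].
  - rewrite ind_T; auto. apply jv_eq_iff; auto.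
  - rewrite ind_F; auto. rewrite <- jv_eq_iff; auto.
Qed.

Lemma Pr_pos p L w : prob_space p -> 0 < p w -> 0 < Pr p L w.
Proof.
  intros Hp Hw. rewrite Pr_Qm. apply Rlt_le_trans with (p w); auto.
  apply Qm_ge_term; auto. intros Z _; auto.
Qed.

Lemma Pr_le1 p L w : prob_space p -> Pr p L w <= 1.
Proof. intros Hp. rewrite Pr_Qm. apply Qm_le1; auto. Qed.

Lemma Pr_app_le p L L' w : prob_space p -> Pr p (L ++ L') w <= Pr p L' w.
Proof.
  intros Hp. rewrite !Pr_Qm. apply Qm_mono; auto. intros w' _ H Z HZ.
  apply H. apply in_or_app; auto.
Qed.

Definition dep (p : nat -> R) (X Y : list RV) : Prop :=
  forall w w', 0 < p w -> 0 < p w' -> agree Y w w' -> agree X w w'.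

Lemma dep_incl p X Y : incl X Y -> dep p X Y.
Proof. intros H w w' _ _ HY Z HZ. apply HY, H, HZ. Qed.
Lemma dep_trans p X Y Z : dep p X Y -> dep p Y Z -> dep p X Z.
Proof. intros H1 H2 w w' a b c. apply H1; auto. Qed.
Lemma dep_app p X1 X2 Y : dep p X1 Y -> dep p X2 Y -> dep p (X1 ++ X2) Y.
Proof.
  intros H1 H2 w w' a b c Z HZ. apply in_app_or in HZ as [HZ|HZ].
  apply (H1 w w'); auto. apply (H2 w w'); auto.
Qed.
Lemma dep_cons p A X Y : dep p (A :: nil) Y -> dep p X Y -> dep p (A :: X) Y.
Proof. intros. apply (dep_app p (A :: nil) X Y); auto. Qed.
Lemma dep_nil p Y : dep p nil Y.
Proof. intros w w' a b c Z []. Qed.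

Lemma Pr_dep_le p X Y w : prob_space p -> dep p X Y -> 0 < p w -> Pr p Y w <= Pr p X w.
Proof.
  intros Hp H Hw. rewrite !Pr_Qm. apply Qm_mono; [auto|]. intros w' Hw'. apply H; auto.
Qed.

Lemma cond0_dep p X Y : prob_space p -> cond_entropy p X Y 0 -> dep p X Y.
Proof.
  intros Hp H.
  set (f := fun w => p w * - ln (Pr p (X ++ Y) w / Pr p Y w)).
  assert (Hf : forall w, 0 <= f w).
  { intros w. unfold f. destruct (proj1 Hp w) as [Hw|Hw]; [|rewrite <- Hw; lra].
    apply Rmult_le_pos; [lra|].
    assert (h1 := Pr_pos p (X ++ Y) w Hp Hw). assert (h2 := Pr_pos p Y w Hp Hw).
    assert (h3 := Pr_app_le p X Y w Hp).
    assert (Hle : Pr p (X ++ Y) w / Pr p Y w <= 1).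
    { apply Rmult_le_reg_r with (Pr p Y w); auto. unfold Rdiv. rewrite Rmult_assoc, Rinv_l; lra. }
    assert (Hgt : 0 < Pr p (X ++ Y) w / Pr p Y w) by (apply Rdiv_lt_0_compat; auto).
    destruct Hle as [H1|H1]. assert (H2 : ln (Pr p (X ++ Y) w / Pr p Y w) < ln 1) by (apply ln_increasing; auto).
    rewrite ln_1 in H2; lra. rewrite H1, ln_1; lra. }
  assert (Hz : forall w, f w = 0).
  { intros w. assert (f w <= 0) by (apply (term_le_lim f 0); auto). specialize (Hf w). lra. }
  intros w w' Hw Hw' Hag.
  assert (Heq : Pr p (X ++ Y) w = Pr p Y w).
  { specialize (Hz w). unfold f in Hz. apply Rmult_integral in Hz as [Hz|Hz]; [lra|].
    assert (ln (Pr p (X ++ Y) w / Pr p Y w) = 0) by lra.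
    assert (h1 := Pr_pos p (X ++ Y) w Hp Hw). assert (h2 := Pr_pos p Y w Hp Hw).
    assert (Pr p (X ++ Y) w / Pr p Y w = 1).
    { rewrite <- (exp_ln (Pr p (X ++ Y) w / Pr p Y w)) by (apply Rdiv_lt_0_compat; auto).
      rewrite H0. apply exp_0. }
    apply Rmult_eq_reg_r with (/ Pr p Y w). rewrite Rinv_r by lra. exact H1.
    apply Rinv_neq_0_compat; lra. }
  destruct (classic (agree X w w')) as [HX|HX]; auto. exfalso.
  rewrite !Pr_Qm in Heq.
  assert (Qm p (agree (X ++ Y) w) + p w' <= Qm p (agree Y w)).
  { apply Qm_strict; auto.
    - intros v Hv Z HZ. apply Hv, in_or_app; auto.
    - intros Hc. apply HX. intros Z HZ. apply Hc, in_or_app; auto. }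
  lra.
Qed.


Definition eterm p L w := p w * - ln (Pr p L w).
Definition ent p L := sumR (eterm p L).

Lemma eterm_nonneg p L w : prob_space p -> 0 <= eterm p L w.
Proof.
  intros Hp. unfold eterm. destruct (proj1 Hp w) as [Hw|Hw]; [|rewrite <- Hw; lra].
  apply Rmult_le_pos; [lra|]. assert (h1 := Pr_pos p L w Hp Hw). assert (h2 := Pr_le1 p L w Hp).
  destruct h2 as [h2|h2]. assert (ln (Pr p L w) < ln 1) by (apply ln_increasing; auto).
  rewrite ln_1 in H; lra. rewrite h2, ln_1; lra.
Qed.

Lemma ln_le_mono x y : 0 < x -> x <= y -> ln x <= ln y.
Proof. intros Hx [H|H]. left; apply ln_increasing; auto. rewrite H; lra. Qed.

Lemma eterm_le_dep p X Y w : prob_space p -> dep p X Y -> eterm p X w <= eterm p Y w.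
Proof.
  intros Hp H. unfold eterm. destruct (proj1 Hp w) as [Hw|Hw]; [|rewrite <- Hw; lra].
  apply Rmult_le_compat_l; [lra|]. apply Ropp_le_contravar. apply ln_le_mono.
  apply Pr_pos; auto. apply Pr_dep_le; auto.
Qed.

Lemma eterm_eq_dep p X Y w : prob_space p -> dep p X Y -> dep p Y X -> eterm p X w = eterm p Y w.
Proof. intros. apply Rle_antisym; apply eterm_le_dep; auto. Qed.

Lemma ent_conv p M B L : prob_space p -> entropy p (M :: nil) B -> dep p L (M :: nil) ->
  infinite_sum (eterm p L) (ent p L).
Proof.
  intros Hp HB HL. unfold ent. apply sumR_spec. apply conv_bounded with B.
  - intros; apply eterm_nonneg; auto.
  - intros n. apply Rle_trans with (sum_f_R0 (eterm p (M :: nil)) n).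
    + apply sum_Rle. intros. apply eterm_le_dep; auto.
    + apply psum_le_lim; auto. intros; apply eterm_nonneg; auto.
Qed.

Lemma ent_of p L h : entropy p L h -> ent p L = h.
Proof. intros H. apply sumR_eq. exact H. Qed.

Lemma ent_equiv p X Y : prob_space p -> dep p X Y -> dep p Y X -> ent p X = ent p Y.
Proof.
  intros Hp H1 H2. unfold ent. f_equal. apply functional_extensionality. intros w.
  apply eterm_eq_dep; auto.
Qed.

Lemma ent_mono p M B X Y : prob_space p -> entropy p (M :: nil) B -> dep p X (M :: nil) ->
  dep p Y X -> ent p Y <= ent p X.
Proof.
  intros Hp HB HX HY. apply (lim_le (eterm p Y) (eterm p X)).
  intros; apply eterm_le_dep; auto.
  apply ent_conv with M B; auto. apply dep_trans with X; auto.
  apply ent_conv with M B; auto.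
Qed.

Lemma ent_nil p : prob_space p -> ent p nil = 0.
Proof.
  intros Hp. apply sumR_eq. apply lim_ext with (fun _ => 0).
  - intros w. unfold eterm. rewrite Pr_Qm.
    replace (Qm p (agree nil w)) with (Qm p (fun _ => True)).
    rewrite Qm_True, ln_1; auto; ring. apply Qm_ext; auto. intros v _; split; auto.
    intros _ Z [].
  - intros e He. exists 0%nat. intros n _. unfold R_dist.
    replace (sum_f_R0 (fun _ => 0) n) with 0. rewrite Rminus_diag, Rabs_R0; lra.
    induction n; simpl; auto. rewrite <- IHn; ring.
Qed.

Lemma sum_ext f g n : (forall i, (i <= n)%nat -> f i = g i) -> sum_f_R0 f n = sum_f_R0 g n.
Proof. intros H. induction n; simpl. apply H; lia. rewrite IHn, H; auto. Qed.

Lemma sum_swap (f : nat -> nat -> R) n m :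
  sum_f_R0 (fun i => sum_f_R0 (fun j => f i j) m) n = sum_f_R0 (fun j => sum_f_R0 (fun i => f i j) n) m.
Proof.
  induction n.
  - simpl. apply sum_ext. intros; simpl; auto.
  - rewrite tech5, IHn. rewrite <- sum_plus. apply sum_ext. intros. rewrite tech5. auto.
Qed.

Lemma sum_mul_l (f : nat -> R) c n : c * sum_f_R0 f n = sum_f_R0 (fun i => c * f i) n.
Proof. rewrite scal_sum. apply sum_ext. intros; ring. Qed.

Lemma sum_nonneg (f : nat -> R) n : (forall i, 0 <= f i) -> 0 <= sum_f_R0 f n.
Proof. intros H. apply cond_pos_sum. auto. Qed.

Lemma cv_finite_sum (g : nat -> nat -> R) (l : nat -> R) n :
  (forall w, Un_cv (fun K => g K w) (l w)) -> Un_cv (fun K => sum_f_R0 (g K) n) (sum_f_R0 l n).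
Proof.
  intros H. induction n; simpl. apply H. apply CV_plus; auto.
Qed.


Lemma cv_const c : Un_cv (fun _ => c) c.
Proof. intros e He. exists 0%nat. intros. unfold R_dist. rewrite Rminus_diag, Rabs_R0. lra. Qed.

Lemma Pr_nonneg p L w : prob_space p -> 0 <= Pr p L w.
Proof. intros Hp. rewrite Pr_Qm. apply Qm_nonneg; auto. Qed.

Lemma inner_claim p (A Bl C : list RV) u v n : prob_space p ->
  sum_f_R0 (fun w => p w / (Pr p (A ++ Bl ++ C) w * Pr p C w) *
     (ind (agree (A ++ C) w u) (p u) * ind (agree (Bl ++ C) w v) (p v))) n
  <= p u * ind (agree C u v) (p v) / Pr p C u.
Proof.
  intros Hp. assert (Hp0 := proj1 Hp).
  assert (HPCu := Pr_nonneg p C u Hp).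
  destruct (classic (agree C u v)) as [Huv|Huv].
  - set (Es := fun w' => (forall Z, In Z A -> Z w' = Z u) /\ (forall Z, In Z Bl -> Z w' = Z v) /\
                          (forall Z, In Z C -> Z w' = Z u)).
    set (Qs := Qm p Es).
    assert (HQs : 0 <= Qs) by (apply Qm_nonneg; auto).
    set (K0 := p u * p v / (Qs * Pr p C u)).
    assert (HK0 : 0 <= K0).
    { unfold K0. unfold Rdiv. apply Rmult_le_pos. apply Rmult_le_pos; auto.
      destruct (Rle_lt_or_eq_dec 0 (Qs * Pr p C u)) as [h|h]. apply Rmult_le_pos; auto.
      left; apply Rinv_0_lt_compat; auto. rewrite <- h, Rinv_0; lra. }
    apply Rle_trans with (sum_f_R0 (fun w => ind (Es w) (p w) * K0) n).
    + apply sum_Rle. intros w _.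
      destruct (classic (agree (A ++ C) w u)) as [Ha|Ha]; [|rewrite (ind_F _ _ Ha);
        assert (0 <= ind (Es w) (p w)) by (apply ind_bounds; auto);
        rewrite Rmult_0_l, Rmult_0_r; apply Rmult_le_pos; auto].
      destruct (classic (agree (Bl ++ C) w v)) as [Hb|Hb]; [|rewrite (ind_F _ _ Hb);
        assert (0 <= ind (Es w) (p w)) by (apply ind_bounds; auto);
        rewrite Rmult_0_r, Rmult_0_r; apply Rmult_le_pos; auto].
      assert (HE : Es w).
      { unfold Es. split; [|split]; intros Z HZ; symmetry.
        apply Ha, in_or_app; auto. apply Hb, in_or_app; auto. apply Ha, in_or_app; auto. }
      rewrite (ind_T _ _ Ha), (ind_T _ _ Hb), (ind_T _ _ HE).
      assert (H1 : Pr p (A ++ Bl ++ C) w = Qs).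
      { rewrite Pr_Qm. apply Qm_ext; auto. intros w' _. destruct HE as [E1 [E2 E3]]. split.
        - intros H. split; [|split]; intros Z HZ.
          + rewrite (H Z); [apply E1|apply in_or_app]; auto.
          + rewrite (H Z); [apply E2|apply in_or_app; right; apply in_or_app]; auto.
          + rewrite (H Z); [apply E3|apply in_or_app; right; apply in_or_app]; auto.
        - intros [F1 [F2 F3]] Z HZ. apply in_app_or in HZ as [HZ|HZ].
          rewrite F1, E1; auto. apply in_app_or in HZ as [HZ|HZ].
          rewrite F2, E2; auto. rewrite F3, E3; auto. }
      assert (H2 : Pr p C w = Pr p C u).
      { rewrite !Pr_Qm. apply Qm_ext; auto. intros w' _. destruct HE as [E1 [E2 E3]]. split.
        - intros H Z HZ. rewrite H, E3; auto.
        - intros H Z HZ. rewrite H, E3; auto. }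
      rewrite H1, H2. unfold K0. unfold Rdiv. right; ring.
    + rewrite <- scal_sum. 
      assert (Hs := Qm_psum p Es n Hp). fold Qs in Hs.
      apply Rle_trans with (Qs * K0). rewrite Rmult_comm. apply Rmult_le_compat_r; auto.
      rewrite (ind_T _ _ Huv). unfold K0.
      destruct (Req_dec Qs 0) as [Hz|Hz].
      * rewrite Hz. rewrite Rmult_0_l. unfold Rdiv. repeat apply Rmult_le_pos; auto.
        destruct HPCu as [h|h]. left; apply Rinv_0_lt_compat; auto. rewrite <- h, Rinv_0; lra.
      * destruct (Req_dec (Pr p C u) 0) as [Hc|Hc].
        -- rewrite Hc, Rmult_0_r. unfold Rdiv. rewrite Rinv_0, !Rmult_0_r. lra.
        -- right. field. auto.
  - rewrite (ind_F _ _ Huv). unfold Rdiv. rewrite Rmult_0_r, Rmult_0_l.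
    right. transitivity (sum_f_R0 (fun _ => 0) n).
    + apply sum_ext. intros w _.
      destruct (classic (agree (A ++ C) w u)) as [Ha|Ha]; [|rewrite (ind_F _ _ Ha); ring].
      destruct (classic (agree (Bl ++ C) w v)) as [Hb|Hb]; [|rewrite (ind_F _ _ Hb); ring].
      exfalso. apply Huv. intros Z HZ. rewrite (Hb Z), (Ha Z); auto; apply in_or_app; auto.
    + clear. induction n; simpl; auto. rewrite IHn; ring.
Qed.

Lemma prod_sums (f g : nat -> R) K L :
  sum_f_R0 f K * sum_f_R0 g L = sum_f_R0 (fun u => sum_f_R0 (fun v => f u * g v) L) K.
Proof.
  rewrite Rmult_comm, scal_sum. apply sum_ext. intros u _. rewrite sum_mul_l. auto.
Qed.

Lemma FK_bound p (A Bl C : list RV) n K : prob_space p ->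
  sum_f_R0 (fun w => p w / (Pr p (A ++ Bl ++ C) w * Pr p C w) *
     sum_f_R0 (fun u => ind (agree (A ++ C) w u) (p u)) K *
     sum_f_R0 (fun v => ind (agree (Bl ++ C) w v) (p v)) K) n <= 1.
Proof.
  intros Hp. assert (Hp0 := proj1 Hp).
  set (c := fun w => p w / (Pr p (A ++ Bl ++ C) w * Pr p C w)).
  set (a := fun w u => ind (agree (A ++ C) w u) (p u)).
  set (b := fun w v => ind (agree (Bl ++ C) w v) (p v)).
  transitivity (sum_f_R0 (fun u => sum_f_R0 (fun v => sum_f_R0 (fun w => c w * (a w u * b w v)) n) K) K).
  - right.
    transitivity (sum_f_R0 (fun w => sum_f_R0 (fun u => sum_f_R0 (fun v => c w * (a w u * b w v)) K) K) n).
    { apply sum_ext. intros w _.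
      transitivity (c w * (sum_f_R0 (fun u => a w u) K * sum_f_R0 (fun v => b w v) K)). unfold c, a, b; ring.
      rewrite prod_sums, sum_mul_l. apply sum_ext. intros u _.
      rewrite sum_mul_l. apply sum_ext. intros v _. ring. }
    rewrite (sum_swap (fun w u => sum_f_R0 (fun v => c w * (a w u * b w v)) K)).
    apply sum_ext. intros u _.
    apply (sum_swap (fun w v => c w * (a w u * b w v))).
  - apply Rle_trans with (sum_f_R0 (fun u => sum_f_R0 (fun v => p u * ind (agree C u v) (p v) / Pr p C u) K) K).
    + apply sum_Rle. intros u _. apply sum_Rle. intros v _. unfold c, a, b. apply inner_claim; auto.
    + apply Rle_trans with (sum_f_R0 p K); [|apply p_psum_le1; auto].
      apply sum_Rle. intros u _.
      transitivity (p u / Pr p C u * sum_f_R0 (fun v => ind (agree C u v) (p v)) K).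
      * right. rewrite sum_mul_l. apply sum_ext. intros; unfold Rdiv; ring.
      * destruct (Hp0 u) as [Hu|Hu]; [|rewrite <- Hu; unfold Rdiv; rewrite !Rmult_0_l; lra].
        assert (HP := Pr_pos p C u Hp Hu).
        assert (Hs := Qm_psum p (agree C u) K Hp). rewrite <- Pr_Qm in Hs.
        apply Rle_trans with (p u / Pr p C u * Pr p C u).
        apply Rmult_le_compat_l; auto. unfold Rdiv. apply Rmult_le_pos; [lra|left; apply Rinv_0_lt_compat; auto].
        right. field. lra.
Qed.

Lemma K_bound p (A Bl C : list RV) n : prob_space p ->
  sum_f_R0 (fun w => p w * (Pr p (A ++ C) w * Pr p (Bl ++ C) w / (Pr p (A ++ Bl ++ C) w * Pr p C w))) n <= 1.
Proof.
  intros Hp.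
  apply (Rle_cv_lim (Un := fun K => sum_f_R0 (fun w => p w / (Pr p (A ++ Bl ++ C) w * Pr p C w) *
     sum_f_R0 (fun u => ind (agree (A ++ C) w u) (p u)) K *
     sum_f_R0 (fun v => ind (agree (Bl ++ C) w v) (p v)) K) n) (Vn := fun _ => 1)).
  - intros K. apply FK_bound; auto.
  - replace (sum_f_R0 (fun w => p w * (Pr p (A ++ C) w * Pr p (Bl ++ C) w / (Pr p (A ++ Bl ++ C) w * Pr p C w))) n)
      with (sum_f_R0 (fun w => p w / (Pr p (A ++ Bl ++ C) w * Pr p C w) * Pr p (A ++ C) w * Pr p (Bl ++ C) w) n)
      by (apply sum_ext; intros; unfold Rdiv; ring).
    apply (cv_finite_sum (fun K w => p w / (Pr p (A ++ Bl ++ C) w * Pr p C w) *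
     sum_f_R0 (fun u => ind (agree (A ++ C) w u) (p u)) K *
     sum_f_R0 (fun v => ind (agree (Bl ++ C) w v) (p v)) K)).
    intros w. apply CV_mult. apply CV_mult. apply cv_const.
    rewrite Pr_Qm. apply (Qm_conv p (agree (A ++ C) w) Hp).
    rewrite Pr_Qm. apply (Qm_conv p (agree (Bl ++ C) w) Hp).
  - apply cv_const.
Qed.

Lemma submod p M B (A Bl C : list RV) : prob_space p -> entropy p (M :: nil) B ->
  dep p (A ++ Bl ++ C) (M :: nil) ->
  ent p (A ++ Bl ++ C) + ent p C <= ent p (A ++ C) + ent p (Bl ++ C).
Proof.
  intros Hp HB Hd. assert (Hp0 := proj1 Hp).
  assert (dAC : dep p (A ++ C) (M :: nil)).
  { apply dep_trans with (A ++ Bl ++ C); auto. apply dep_incl. intros z Hz.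
    apply in_app_or in Hz as [Hz|Hz]; apply in_or_app; auto. right; apply in_or_app; auto. }
  assert (dBC : dep p (Bl ++ C) (M :: nil)).
  { apply dep_trans with (A ++ Bl ++ C); auto. apply dep_incl. intros z Hz. apply in_or_app; auto. }
  assert (dC : dep p C (M :: nil)).
  { apply dep_trans with (A ++ Bl ++ C); auto. apply dep_incl. intros z Hz. apply in_or_app; right; apply in_or_app; auto. }
  assert (HT := lim_minus _ _ _ _ (lim_minus _ _ _ _ (lim_plus _ _ _ _
     (ent_conv p M B _ Hp HB dAC) (ent_conv p M B _ Hp HB dBC))
     (ent_conv p M B _ Hp HB Hd)) (ent_conv p M B _ Hp HB dC)).
  cut (0 <= ent p (A ++ C) + ent p (Bl ++ C) - ent p (A ++ Bl ++ C) - ent p C); [lra|].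
  assert (Hp1 : Un_cv (sum_f_R0 p) 1) by exact (proj2 Hp).
  assert (Hcv := CV_minus _ _ _ _ Hp1 (cv_const 1)).
  rewrite Rminus_diag in Hcv.
  apply (Rle_cv_lim (Un := fun n => sum_f_R0 p n - 1) (Vn := sum_f_R0 (fun n =>
    eterm p (A ++ C) n + eterm p (Bl ++ C) n - eterm p (A ++ Bl ++ C) n - eterm p C n))); [|exact Hcv|exact HT].
  intros n.
    apply Rle_trans with (sum_f_R0 p n - sum_f_R0 (fun w => p w * (Pr p (A ++ C) w * Pr p (Bl ++ C) w / (Pr p (A ++ Bl ++ C) w * Pr p C w))) n).
    { assert (h := K_bound p A Bl C n Hp). lra. }
    rewrite <- minus_sum. apply sum_Rle. intros w _.
    unfold eterm. destruct (Hp0 w) as [Hw|Hw]; [|rewrite <- Hw; lra].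
    assert (h1 := Pr_pos p (A ++ C) w Hp Hw). assert (h2 := Pr_pos p (Bl ++ C) w Hp Hw).
    assert (h3 := Pr_pos p (A ++ Bl ++ C) w Hp Hw). assert (h4 := Pr_pos p C w Hp Hw).
    set (r := Pr p (A ++ C) w * Pr p (Bl ++ C) w / (Pr p (A ++ Bl ++ C) w * Pr p C w)).
    assert (Hr : 0 < r) by (unfold r; apply Rdiv_lt_0_compat; apply Rmult_lt_0_compat; auto).
    assert (Hln : ln r = ln (Pr p (A ++ C) w) + ln (Pr p (Bl ++ C) w) - ln (Pr p (A ++ Bl ++ C) w) - ln (Pr p C w)).
    { unfold r, Rdiv. rewrite ln_mult, ln_mult, ln_Rinv, ln_mult; auto; try ring.
      apply Rmult_lt_0_compat; auto. apply Rmult_lt_0_compat; auto.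
      apply Rinv_0_lt_compat, Rmult_lt_0_compat; auto. }
    assert (Hl1 : ln r <= r - 1).
    { assert (h := exp_ineq1_le (ln r)). rewrite exp_ln in h; auto. lra. }
    assert (p w * ln r <= p w * (r - 1)) by (apply Rmult_le_compat_l; lra).
    rewrite Hln in H. lra.
Qed.


Inductive el := eW (i : nat) | eS (i j : nat).
Definition el_eqb (a b : el) : bool :=
  match a, b with
  | eW i, eW i' => Nat.eqb i i'
  | eS i j, eS i' j' => Nat.eqb i i' && Nat.eqb j j'
  | _, _ => false end.
Lemma el_eqb_eq a b : el_eqb a b = true -> a = b.
Proof.
  destruct a, b; simpl; try discriminate.
  intros H. apply Nat.eqb_eq in H; subst; auto.
  intros H. apply andb_prop in H as [H1 H2]. apply Nat.eqb_eq in H1, H2; subst; auto.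
Qed.
Definition memb (e : el) (L : list el) := existsb (el_eqb e) L.
Lemma memb_In e L : memb e L = true -> In e L.
Proof.
  unfold memb. intros H. apply existsb_exists in H as [x [Hx He]].
  apply el_eqb_eq in He; subst; auto.
Qed.
Definition inclb (L L' : list el) := forallb (fun e => memb e L') L.
Lemma inclb_incl L L' : inclb L L' = true -> incl L L'.
Proof.
  unfold inclb. intros H x Hx. rewrite forallb_forall in H. apply memb_In, H, Hx.
Qed.
Definition validb (e : el) : bool :=
  match e with
  | eW i => Nat.ltb i 5
  | eS i j => Nat.ltb i 5 && Nat.ltb j 5 && negb (Nat.eqb i j) end.
Definition allvalid (L : list el) := forallb validb L.

Definition nodes := [0;1;2;3;4]%nat.
Definition others (j : nat) := filter (fun i => negb (Nat.eqb i j)) nodes.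
Definition out_of (i : nat) : list el := map (fun j => eS i j) (others i).
Definition in_of (j : nat) : list el := map (fun i => eS i j) (others j).
Definition Wset (L : list el) := filter (fun i => memb (eW i) L) nodes.
Definition step (L : list el) : list el :=
  L ++ flat_map (fun i => if memb (eW i) L then out_of i else nil) nodes
    ++ flat_map (fun j => if inclb (in_of j) L then eW j :: nil else nil) nodes
    ++ (if Nat.leb 4 (length (Wset L)) then map eW nodes else nil).
Definition clos L := step (step (step (step L))).

Definition iel (W : nat -> RV) (S : nat -> nat -> RV) (e : el) : RV :=
  match e with eW i => W i | eS i j => S i j end.
Definition Lmap W S (L : list el) : list RV := map (iel W S) L.

Lemma dep_all p (Y : list RV) (f : el -> RV) (X : list el) :
  (forall e, In e X -> dep p (f e :: nil) Y) -> dep p (map f X) Y.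
Proof.
  induction X as [|e X IH]; intros H; simpl. apply dep_nil.
  apply dep_cons. apply H; simpl; auto. apply IH. intros; apply H; simpl; auto.
Qed.

Lemma dep_one_in p (Z : RV) Y : In Z Y -> dep p (Z :: nil) Y.
Proof. intros H. apply dep_incl. intros z [<-|[]]; auto. Qed.

Lemma in_Lmap W S e L : In e L -> In (iel W S e) (Lmap W S L).
Proof. intros H. apply in_map; auto. Qed.

Lemma others_In i j : In i (others j) <-> In i nodes /\ i <> j.
Proof.
  unfold others. rewrite filter_In. rewrite Bool.negb_true_iff, Nat.eqb_neq. tauto.
Qed.

Lemma nodes_lt i : In i nodes <-> (i < 5)%nat.
Proof. unfold nodes; simpl. lia. Qed.


Definition facts p (M : RV) (W : nat -> RV) (S : nat -> nat -> RV) : Prop :=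
  prob_space p /\
  (forall i j, (i < 5)%nat -> (j < 5)%nat -> i <> j -> dep p (S i j :: nil) (W i :: nil)) /\
  (forall j I, (j < 5)%nat -> subset_idx 5 I -> ~ In j I -> (4 <= length I)%nat ->
      dep p (W j :: nil) (map (fun i => S i j) I)) /\
  (forall J, subset_idx 5 J -> (4 <= length J)%nat -> dep p (M :: nil) (map W J)) /\
  (forall j, (j < 5)%nat -> dep p (W j :: nil) (M :: nil)).

Lemma NoDup_nodes : NoDup nodes.
Proof. unfold nodes. repeat constructor; simpl; lia. Qed.

Lemma others_len j : (j < 5)%nat -> (4 <= length (others j))%nat.
Proof. intros H. destruct j as [|[|[|[|[|j]]]]]; simpl; lia. Qed.

Lemma others_sub j : subset_idx 5 (others j).
Proof.
  split. apply NoDup_filter, NoDup_nodes. intros i Hi. apply others_In in Hi as [Hi _].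
  apply nodes_lt; auto.
Qed.

Lemma step_sound p M W S L : facts p M W S -> dep p (Lmap W S (step L)) (Lmap W S L).
Proof.
  intros [Hp [hS [hR [hK hW]]]]. unfold step, Lmap. rewrite !map_app.
  apply dep_app; [apply dep_incl; intros x; auto|].
  apply dep_app; [|apply dep_app].
  - apply dep_all. intros e He. apply in_flat_map in He as [i [Hi He]].
    destruct (memb (eW i) L) eqn:Hm; [|destruct He].
    unfold out_of in He. apply in_map_iff in He as [j [<- Hj]]. apply others_In in Hj as [Hj Hij].
    apply nodes_lt in Hi, Hj. simpl.
    apply dep_trans with (W i :: nil). apply hS; auto.
    apply dep_one_in. apply (in_Lmap W S (eW i)). apply memb_In; auto.
  - apply dep_all. intros e He. apply in_flat_map in He as [j [Hj He]].
    destruct (inclb (in_of j) L) eqn:Hm; [|destruct He].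
    destruct He as [<-|[]]. simpl. apply nodes_lt in Hj.
    apply dep_trans with (map (fun i => S i j) (others j)).
    + apply hR; auto. apply others_sub. intros Hc; apply others_In in Hc; tauto. apply others_len; auto.
    + apply dep_incl. intros x Hx. apply in_map_iff in Hx as [i [<- Hi]].
      apply (in_Lmap W S (eS i j)). apply (inclb_incl _ _ Hm). unfold in_of. apply (in_map (fun i => eS i j)); auto.
  - destruct (Nat.leb 4 (length (Wset L))) eqn:Hl; [|apply dep_nil].
    apply Nat.leb_le in Hl.
    apply dep_all. intros e He. apply in_map_iff in He as [k [<- Hk]]. simpl.
    apply nodes_lt in Hk.
    apply dep_trans with (M :: nil). apply hW; auto.
    apply dep_trans with (map W (Wset L)).
    + apply hK; auto. split. apply NoDup_filter, NoDup_nodes.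
      intros i Hi. apply filter_In in Hi as [Hi _]. apply nodes_lt; auto.
    + apply dep_incl. intros x Hx. apply in_map_iff in Hx as [i [<- Hi]].
      apply filter_In in Hi as [_ Hi]. apply (in_Lmap W S (eW i)). apply memb_In; auto.
Qed.

Lemma clos_sound p M W S L : facts p M W S -> dep p (Lmap W S (clos L)) (Lmap W S L).
Proof.
  intros HF. unfold clos.
  apply dep_trans with (Lmap W S (step (step (step L)))). apply step_sound with M; auto.
  apply dep_trans with (Lmap W S (step (step L))). apply step_sound with M; auto.
  apply dep_trans with (Lmap W S (step L)). apply step_sound with M; auto.
  apply step_sound with M; auto.
Qed.

Lemma good_el p M W S L : facts p M W S -> allvalid L = true -> dep p (Lmap W S L) (M :: nil).
Proof.
  intros HF HV. destruct HF as [Hp [hS [hR [hK hW]]]].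
  apply dep_all. intros e He. unfold allvalid in HV. rewrite forallb_forall in HV.
  specialize (HV e He). destruct e as [i|i j]; simpl in *.
  - apply hW. apply Nat.ltb_lt; auto.
  - apply andb_prop in HV as [HV H3]. apply andb_prop in HV as [H1 H2].
    apply Nat.ltb_lt in H1, H2. apply Bool.negb_true_iff, Nat.eqb_neq in H3.
    apply dep_trans with (W i :: nil). apply hS; auto. apply hW; auto.
Qed.

Lemma dep_el p M W S L L' : facts p M W S -> inclb L (clos L') = true ->
  dep p (Lmap W S L) (Lmap W S L').
Proof.
  intros HF H. apply dep_trans with (Lmap W S (clos L')).
  apply dep_incl. intros x Hx. apply in_map_iff in Hx as [e [<- He]]. apply in_Lmap.
  apply (inclb_incl _ _ H); auto.
  apply clos_sound with M; auto.
Qed.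

Lemma ent_el_eq p M W S L L' : facts p M W S ->
  inclb L (clos L') = true -> inclb L' (clos L) = true ->
  ent p (Lmap W S L) = ent p (Lmap W S L').
Proof.
  intros HF H1 H2. apply ent_equiv. apply HF. apply dep_el with M; auto. apply dep_el with M; auto.
Qed.


Definition eqv (L L' : list el) := andb (inclb L (clos L')) (inclb L' (clos L)).

Lemma ent_eqv p M W S L L' : facts p M W S -> eqv L L' = true ->
  ent p (Lmap W S L) = ent p (Lmap W S L').
Proof.
  intros HF H. apply andb_prop in H as [H1 H2]. apply ent_el_eq with M; auto.
Qed.

Lemma row_sub p M W S B (K : list el) x y L1 L2 L3 L4 :
  facts p M W S -> entropy p (M :: nil) B -> allvalid (x :: y :: K) = true ->
  eqv L1 (x :: K) = true -> eqv L2 (y :: K) = true -> eqv L3 (x :: y :: K) = true -> eqv L4 K = true ->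
  ent p (Lmap W S L3) + ent p (Lmap W S L4) <= ent p (Lmap W S L1) + ent p (Lmap W S L2).
Proof.
  intros HF HB HV E1 E2 E3 E4.
  rewrite (ent_eqv p M W S L1 _ HF E1), (ent_eqv p M W S L2 _ HF E2),
    (ent_eqv p M W S L3 _ HF E3), (ent_eqv p M W S L4 _ HF E4).
  apply (submod p M B (Lmap W S [x]) (Lmap W S [y]) (Lmap W S K) (proj1 HF) HB).
  apply (good_el p M W S (x :: y :: K) HF HV).
Qed.

Lemma subadd p M B X Y : prob_space p -> entropy p (M :: nil) B -> dep p (X ++ Y) (M :: nil) ->
  ent p (X ++ Y) <= ent p X + ent p Y.
Proof.
  intros Hp HB H. assert (h := submod p M B X Y nil Hp HB).
  rewrite !app_nil_r, ent_nil in h; auto. specialize (h H). lra.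
Qed.

Definition isS (e : el) := match e with eS _ _ => validb e | _ => false end.

Lemma isS_valid Ps : forallb isS Ps = true -> allvalid Ps = true.
Proof.
  induction Ps as [|e Ps IH]; simpl; auto. intros H. apply andb_prop in H as [H1 H2].
  rewrite IH; auto. destruct e; [discriminate|]. simpl in *. rewrite H1; auto.
Qed.

Lemma ent_Ps p M W S B beta Ps : facts p M W S -> entropy p (M :: nil) B ->
  (forall i j, (i < 5)%nat -> (j < 5)%nat -> i <> j -> ent p (S i j :: nil) = beta) ->
  forallb isS Ps = true -> ent p (Lmap W S Ps) <= INR (length Ps) * beta.
Proof.
  intros HF HB Hb. induction Ps as [|e Ps IH]; intros H.
  - simpl. rewrite ent_nil. lra. apply HF.
  - simpl in H. apply andb_prop in H as [He H]. specialize (IH H).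
    destruct e as [i|i j]; [discriminate|]. simpl in He. assert (He0 := He).
    apply andb_prop in He as [He H3]. apply andb_prop in He as [H1 H2].
    apply Nat.ltb_lt in H1, H2. apply Bool.negb_true_iff, Nat.eqb_neq in H3.
    change (Lmap W S (eS i j :: Ps)) with ((S i j :: nil) ++ Lmap W S Ps).
    apply Rle_trans with (ent p (S i j :: nil) + ent p (Lmap W S Ps)).
    apply subadd with M B. apply HF. auto.
    apply (good_el p M W S (eS i j :: Ps) HF). simpl. rewrite He0. simpl.
    apply isS_valid; auto.
    rewrite Hb; auto. simpl length. rewrite S_INR. lra.
Qed.

Lemma row_rep p M W S B beta L L' Ps c :
  facts p M W S -> entropy p (M :: nil) B ->
  (forall i j, (i < 5)%nat -> (j < 5)%nat -> i <> j -> ent p (S i j :: nil) = beta) ->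
  allvalid (L' ++ Ps) = true -> inclb L (clos (L' ++ Ps)) = true -> forallb isS Ps = true ->
  c = INR (length Ps) ->
  ent p (Lmap W S L) <= ent p (Lmap W S L') + c * beta.
Proof.
  intros HF HB Hb HV HI HS ->.
  apply Rle_trans with (ent p (Lmap W S (L' ++ Ps))).
  - apply ent_mono with M B. apply HF. auto. apply good_el; auto. apply dep_el with M; auto.
  - replace (Lmap W S (L' ++ Ps)) with (Lmap W S L' ++ Lmap W S Ps) by (unfold Lmap; rewrite map_app; auto).
    assert (Hg : dep p (Lmap W S L' ++ Lmap W S Ps) (M::nil)) by (unfold Lmap; rewrite <- map_app; apply good_el; auto).
    apply Rle_trans with (ent p (Lmap W S L') + ent p (Lmap W S Ps)).
    apply subadd with M B; auto. apply HF.
    assert (h := ent_Ps p M W S B beta Ps HF HB Hb HS). lra.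
Qed.

Lemma ent_full p M W S L : facts p M W S -> allvalid L = true ->
  inclb (map eW [0;1;2;3]%nat) L = true -> ent p (Lmap W S L) = ent p (M :: nil).
Proof.
  intros HF HV HI. apply ent_equiv. apply HF. apply good_el; auto.
  apply dep_trans with (map W [0;1;2;3]%nat).
  - apply (proj1 (proj2 (proj2 (proj2 HF)))). split.
    repeat constructor; simpl; lia. intros j Hj; simpl in Hj; lia. simpl; lia.
  - apply dep_incl. intros x Hx. apply in_map_iff in Hx as [i [<- Hi]].
    apply (in_Lmap W S (eW i)). apply (inclb_incl _ _ HI). apply (in_map eW); auto.
Qed.


Theorem mainTheorem11 (p : nat -> R) (M : RV) (W : nat -> RV) (S : nat -> nat -> RV)
    (B alpha beta : R) :
  prob_space p ->
  regen_code 5 4 4 p M W S B alpha beta ->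
  5 * B <= 7 * alpha + 22 * beta.
Proof.
  intros Hp [H1 [H2 [H3 [H4 [H5 [H6 H7]]]]]].
  assert (HF : facts p M W S).
  { split; [auto|split; [|split; [|split]]].
    - intros i j Hi Hj Hij. apply cond0_dep; auto.
    - intros j I Hj HI HnI HlI. apply cond0_dep; auto.
    - intros J HJ HlJ. apply cond0_dep; auto.
    - intros j Hj. apply cond0_dep; auto. }
  assert (HB : entropy p (M :: nil) B) by exact H1.
  assert (HA : forall j, (j < 5)%nat -> ent p (Lmap W S [eW j]) = alpha) by (intros; apply ent_of; apply H2; auto).
  assert (HBt : forall i j, (i < 5)%nat -> (j < 5)%nat -> i <> j -> ent p (S i j :: nil) = beta)
    by (intros; apply ent_of; apply H5; auto).
  assert (h0 : ent p (Lmap W S (@nil el)) = 0) by (apply ent_nil; auto).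
  assert (h1 : ent p (Lmap W S [eW 0]%nat) = alpha) by (exact (HA 0%nat ltac:(lia))).
  assert (h2 : ent p (Lmap W S [eW 2]%nat) = alpha) by (exact (HA 2%nat ltac:(lia))).
  assert (h3 : ent p (Lmap W S [eW 3]%nat) = alpha) by (exact (HA 3%nat ltac:(lia))).
  assert (h4 : ent p (Lmap W S [eW 0; eW 2; eW 3; eW 4; eS 1 0; eS 1 2]%nat) <= ent p (Lmap W S [eW 0; eW 2; eW 4; eS 1 0; eS 1 2; eS 1 3]%nat) + 0 * beta) by (apply (row_rep p M W S B beta _ _ (@nil el)); auto; try (vm_compute; reflexivity); try (simpl; lra)).
  assert (h5 : ent p (Lmap W S [eW 0; eW 2; eW 3; eW 4; eS 1 0; eS 1 3]%nat) <= ent p (Lmap W S [eW 0; eW 3; eW 4; eS 1 0; eS 1 2; eS 1 3]%nat) + 0 * beta) by (apply (row_rep p M W S B beta _ _ (@nil el)); auto; try (vm_compute; reflexivity); try (simpl; lra)).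
  assert (h6 : ent p (Lmap W S [eW 0; eW 2; eW 3; eW 4; eS 1 2; eS 1 3]%nat) <= ent p (Lmap W S [eW 2; eW 3; eW 4; eS 1 0; eS 1 2; eS 1 3]%nat) + 0 * beta) by (apply (row_rep p M W S B beta _ _ (@nil el)); auto; try (vm_compute; reflexivity); try (simpl; lra)).
  assert (h7 : ent p (Lmap W S [eW 0; eW 1; eW 2; eW 3; eW 4; eS 1 0; eS 1 2; eS 1 3]%nat) = ent p (Lmap W S [eW 0; eW 2; eW 3; eW 4; eS 1 0; eS 1 2]%nat)) by (apply (ent_eqv p M W S); auto; try (vm_compute; reflexivity)).
  assert (h8 : ent p (Lmap W S [eW 0; eW 1; eW 2; eW 3; eW 4; eS 1 0; eS 1 2; eS 1 3]%nat) = ent p (Lmap W S [eW 0; eW 2; eW 3; eW 4; eS 1 0; eS 1 3]%nat)) by (apply (ent_eqv p M W S); auto; try (vm_compute; reflexivity)).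
  assert (h9 : ent p (Lmap W S [eW 0; eW 1; eW 2; eW 3; eW 4; eS 1 0; eS 1 2; eS 1 3]%nat) = ent p (Lmap W S [eW 0; eW 2; eW 3; eW 4; eS 1 2; eS 1 3]%nat)) by (apply (ent_eqv p M W S); auto; try (vm_compute; reflexivity)).
  assert (h10 : ent p (Lmap W S [eW 0; eW 2; eW 3; eW 4; eS 1 0]%nat) <= ent p (Lmap W S [eW 0; eW 1; eW 2; eW 3; eS 1 0]%nat) + 0 * beta) by (apply (row_rep p M W S B beta _ _ (@nil el)); auto; try (vm_compute; reflexivity); try (simpl; lra)).
  assert (h11 : ent p (Lmap W S [eW 0; eW 2; eW 3; eW 4; eS 1 2]%nat) <= ent p (Lmap W S [eW 0; eW 1; eW 2; eW 3; eS 1 2]%nat) + 0 * beta) by (apply (row_rep p M W S B beta _ _ (@nil el)); auto; try (vm_compute; reflexivity); try (simpl; lra)).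
  assert (h12 : ent p (Lmap W S [eW 0; eW 2; eW 3; eW 4; eS 1 3]%nat) <= ent p (Lmap W S [eW 0; eW 1; eW 2; eW 3; eS 1 3]%nat) + 0 * beta) by (apply (row_rep p M W S B beta _ _ (@nil el)); auto; try (vm_compute; reflexivity); try (simpl; lra)).
  assert (h13 : ent p (Lmap W S [eW 2; eW 4; eS 1 0; eS 1 2]%nat) + ent p (Lmap W S [eW 2; eS 1 2]%nat) <= ent p (Lmap W S [eW 2; eW 4; eS 1 2]%nat) + ent p (Lmap W S [eW 2; eS 1 0; eS 1 2]%nat)) by (apply (row_sub p M W S B [eW 2; eS 1 2]%nat (eW 4) (eS 1 0)); auto; try (vm_compute; reflexivity)).
  assert (h14 : ent p (Lmap W S [eW 3; eW 4; eS 1 0; eS 1 3]%nat) + ent p (Lmap W S [eW 3; eS 1 3]%nat) <= ent p (Lmap W S [eW 3; eW 4; eS 1 3]%nat) + ent p (Lmap W S [eW 3; eS 1 0; eS 1 3]%nat)) by (apply (row_sub p M W S B [eW 3; eS 1 3]%nat (eW 4) (eS 1 0)); auto; try (vm_compute; reflexivity)).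
  assert (h15 : ent p (Lmap W S [eW 0; eW 4; eS 1 0; eS 1 2]%nat) + ent p (Lmap W S [eW 0; eS 1 0]%nat) <= ent p (Lmap W S [eW 0; eW 4; eS 1 0]%nat) + ent p (Lmap W S [eW 0; eS 1 0; eS 1 2]%nat)) by (apply (row_sub p M W S B [eW 0; eS 1 0]%nat (eW 4) (eS 1 2)); auto; try (vm_compute; reflexivity)).
  assert (h16 : ent p (Lmap W S [eW 3; eW 4; eS 1 2; eS 1 3]%nat) + ent p (Lmap W S [eW 3; eS 1 3]%nat) <= ent p (Lmap W S [eW 3; eW 4; eS 1 3]%nat) + ent p (Lmap W S [eW 3; eS 1 2; eS 1 3]%nat)) by (apply (row_sub p M W S B [eW 3; eS 1 3]%nat (eW 4) (eS 1 2)); auto; try (vm_compute; reflexivity)).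
  assert (h17 : ent p (Lmap W S [eW 0; eW 4; eS 1 0; eS 1 3]%nat) + ent p (Lmap W S [eW 0; eS 1 0]%nat) <= ent p (Lmap W S [eW 0; eW 4; eS 1 0]%nat) + ent p (Lmap W S [eW 0; eS 1 0; eS 1 3]%nat)) by (apply (row_sub p M W S B [eW 0; eS 1 0]%nat (eW 4) (eS 1 3)); auto; try (vm_compute; reflexivity)).
  assert (h18 : ent p (Lmap W S [eW 2; eW 4; eS 1 2; eS 1 3]%nat) + ent p (Lmap W S [eW 2; eS 1 2]%nat) <= ent p (Lmap W S [eW 2; eW 4; eS 1 2]%nat) + ent p (Lmap W S [eW 2; eS 1 2; eS 1 3]%nat)) by (apply (row_sub p M W S B [eW 2; eS 1 2]%nat (eW 4) (eS 1 3)); auto; try (vm_compute; reflexivity)).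
  assert (h19 : ent p (Lmap W S [eW 0; eW 2; eW 4; eS 1 0; eS 1 2]%nat) <= ent p (Lmap W S [eW 0; eW 4; eS 1 0; eS 1 2]%nat) + 1 * beta) by (apply (row_rep p M W S B beta _ _ [eS 3 2]%nat); auto; try (vm_compute; reflexivity); try (simpl; lra)).
  assert (h20 : ent p (Lmap W S [eW 0; eW 3; eW 4; eS 1 0; eS 1 3]%nat) <= ent p (Lmap W S [eW 0; eW 4; eS 1 0; eS 1 3]%nat) + 1 * beta) by (apply (row_rep p M W S B beta _ _ [eS 2 3]%nat); auto; try (vm_compute; reflexivity); try (simpl; lra)).
  assert (h21 : ent p (Lmap W S [eW 0; eW 2; eW 4; eS 1 0; eS 1 2]%nat) <= ent p (Lmap W S [eW 2; eW 4; eS 1 0; eS 1 2]%nat) + 1 * beta) by (apply (row_rep p M W S B beta _ _ [eS 3 0]%nat); auto; try (vm_compute; reflexivity); try (simpl; lra)).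
  assert (h22 : ent p (Lmap W S [eW 2; eW 3; eW 4; eS 1 2; eS 1 3]%nat) <= ent p (Lmap W S [eW 2; eW 4; eS 1 2; eS 1 3]%nat) + 1 * beta) by (apply (row_rep p M W S B beta _ _ [eS 0 3]%nat); auto; try (vm_compute; reflexivity); try (simpl; lra)).
  assert (h23 : ent p (Lmap W S [eW 0; eW 3; eW 4; eS 1 0; eS 1 3]%nat) <= ent p (Lmap W S [eW 3; eW 4; eS 1 0; eS 1 3]%nat) + 1 * beta) by (apply (row_rep p M W S B beta _ _ [eS 2 0]%nat); auto; try (vm_compute; reflexivity); try (simpl; lra)).
  assert (h24 : ent p (Lmap W S [eW 2; eW 3; eW 4; eS 1 2; eS 1 3]%nat) <= ent p (Lmap W S [eW 3; eW 4; eS 1 2; eS 1 3]%nat) + 1 * beta) by (apply (row_rep p M W S B beta _ _ [eS 0 2]%nat); auto; try (vm_compute; reflexivity); try (simpl; lra)).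
  assert (h25 : ent p (Lmap W S [eW 0; eW 1; eW 2; eW 3]%nat) <= ent p (Lmap W S [eW 0; eW 2; eW 3]%nat) + 1 * beta) by (apply (row_rep p M W S B beta _ _ [eS 4 1]%nat); auto; try (vm_compute; reflexivity); try (simpl; lra)).
  assert (h26 : ent p (Lmap W S [eW 0; eS 1 0; eS 1 2]%nat) + ent p (Lmap W S [eS 1 0]%nat) <= ent p (Lmap W S [eW 0; eS 1 0]%nat) + ent p (Lmap W S [eS 1 0; eS 1 2]%nat)) by (apply (row_sub p M W S B [eS 1 0]%nat (eW 0) (eS 1 2)); auto; try (vm_compute; reflexivity)).
  assert (h27 : ent p (Lmap W S [eW 0; eS 1 0; eS 1 3]%nat) + ent p (Lmap W S [eS 1 0]%nat) <= ent p (Lmap W S [eW 0; eS 1 0]%nat) + ent p (Lmap W S [eS 1 0; eS 1 3]%nat)) by (apply (row_sub p M W S B [eS 1 0]%nat (eW 0) (eS 1 3)); auto; try (vm_compute; reflexivity)).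
  assert (h28 : ent p (Lmap W S [eW 2; eS 1 0; eS 1 2]%nat) + ent p (Lmap W S [eS 1 2]%nat) <= ent p (Lmap W S [eW 2; eS 1 2]%nat) + ent p (Lmap W S [eS 1 0; eS 1 2]%nat)) by (apply (row_sub p M W S B [eS 1 2]%nat (eW 2) (eS 1 0)); auto; try (vm_compute; reflexivity)).
  assert (h29 : ent p (Lmap W S [eW 2; eS 1 2; eS 1 3]%nat) + ent p (Lmap W S [eS 1 2]%nat) <= ent p (Lmap W S [eW 2; eS 1 2]%nat) + ent p (Lmap W S [eS 1 2; eS 1 3]%nat)) by (apply (row_sub p M W S B [eS 1 2]%nat (eW 2) (eS 1 3)); auto; try (vm_compute; reflexivity)).
  assert (h30 : ent p (Lmap W S [eW 3; eS 1 0; eS 1 3]%nat) + ent p (Lmap W S [eS 1 3]%nat) <= ent p (Lmap W S [eW 3; eS 1 3]%nat) + ent p (Lmap W S [eS 1 0; eS 1 3]%nat)) by (apply (row_sub p M W S B [eS 1 3]%nat (eW 3) (eS 1 0)); auto; try (vm_compute; reflexivity)).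
  assert (h31 : ent p (Lmap W S [eW 3; eS 1 2; eS 1 3]%nat) + ent p (Lmap W S [eS 1 3]%nat) <= ent p (Lmap W S [eW 3; eS 1 3]%nat) + ent p (Lmap W S [eS 1 2; eS 1 3]%nat)) by (apply (row_sub p M W S B [eS 1 3]%nat (eW 3) (eS 1 2)); auto; try (vm_compute; reflexivity)).
  assert (h32 : ent p (Lmap W S [eW 0; eW 2; eW 3; eW 4]%nat) <= ent p (Lmap W S [eW 0; eW 2; eW 4; eS 1 3]%nat) + 0 * beta) by (apply (row_rep p M W S B beta _ _ (@nil el)); auto; try (vm_compute; reflexivity); try (simpl; lra)).
  assert (h33 : ent p (Lmap W S [eW 0; eW 2; eW 3; eW 4]%nat) <= ent p (Lmap W S [eW 0; eW 3; eW 4; eS 1 2]%nat) + 0 * beta) by (apply (row_rep p M W S B beta _ _ (@nil el)); auto; try (vm_compute; reflexivity); try (simpl; lra)).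
  assert (h34 : ent p (Lmap W S [eW 0; eW 2; eW 3; eW 4]%nat) <= ent p (Lmap W S [eW 2; eW 3; eW 4; eS 1 0]%nat) + 0 * beta) by (apply (row_rep p M W S B beta _ _ (@nil el)); auto; try (vm_compute; reflexivity); try (simpl; lra)).
  assert (h35 : ent p (Lmap W S [eW 0; eW 1; eW 2; eW 4; eS 1 0; eS 1 2; eS 1 3]%nat) <= ent p (Lmap W S [eW 0; eW 2; eW 3; eW 4; eS 1 0; eS 1 2; eS 1 3]%nat) + 0 * beta) by (apply (row_rep p M W S B beta _ _ (@nil el)); auto; try (vm_compute; reflexivity); try (simpl; lra)).
  assert (h36 : ent p (Lmap W S [eW 0; eW 1; eW 3; eW 4; eS 1 0; eS 1 2; eS 1 3]%nat) <= ent p (Lmap W S [eW 0; eW 2; eW 3; eW 4; eS 1 0; eS 1 2; eS 1 3]%nat) + 0 * beta) by (apply (row_rep p M W S B beta _ _ (@nil el)); auto; try (vm_compute; reflexivity); try (simpl; lra)).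
  assert (h37 : ent p (Lmap W S [eW 1; eW 2; eW 3; eW 4; eS 1 0; eS 1 2; eS 1 3]%nat) <= ent p (Lmap W S [eW 0; eW 2; eW 3; eW 4; eS 1 0; eS 1 2; eS 1 3]%nat) + 0 * beta) by (apply (row_rep p M W S B beta _ _ (@nil el)); auto; try (vm_compute; reflexivity); try (simpl; lra)).
  assert (h38 : ent p (Lmap W S [eW 0; eW 1; eW 2; eW 4; eS 1 0; eS 1 2]%nat) + ent p (Lmap W S [eW 0; eW 1; eW 2; eS 1 2]%nat) <= ent p (Lmap W S [eW 0; eW 1; eW 2; eW 4; eS 1 2]%nat) + ent p (Lmap W S [eW 0; eW 1; eW 2; eS 1 0; eS 1 2]%nat)) by (apply (row_sub p M W S B [eW 0; eW 1; eW 2; eS 1 2]%nat (eW 4) (eS 1 0)); auto; try (vm_compute; reflexivity)).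
  assert (h39 : ent p (Lmap W S [eW 0; eW 1; eW 3; eW 4; eS 1 0; eS 1 3]%nat) + ent p (Lmap W S [eW 0; eW 1; eW 3; eS 1 3]%nat) <= ent p (Lmap W S [eW 0; eW 1; eW 3; eW 4; eS 1 3]%nat) + ent p (Lmap W S [eW 0; eW 1; eW 3; eS 1 0; eS 1 3]%nat)) by (apply (row_sub p M W S B [eW 0; eW 1; eW 3; eS 1 3]%nat (eW 4) (eS 1 0)); auto; try (vm_compute; reflexivity)).
  assert (h40 : ent p (Lmap W S [eW 0; eW 1; eW 2; eW 4; eS 1 0; eS 1 2]%nat) + ent p (Lmap W S [eW 0; eW 1; eW 2; eS 1 0]%nat) <= ent p (Lmap W S [eW 0; eW 1; eW 2; eW 4; eS 1 0]%nat) + ent p (Lmap W S [eW 0; eW 1; eW 2; eS 1 0; eS 1 2]%nat)) by (apply (row_sub p M W S B [eW 0; eW 1; eW 2; eS 1 0]%nat (eW 4) (eS 1 2)); auto; try (vm_compute; reflexivity)).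
  assert (h41 : ent p (Lmap W S [eW 1; eW 2; eW 3; eW 4; eS 1 2; eS 1 3]%nat) + ent p (Lmap W S [eW 1; eW 2; eW 3; eS 1 3]%nat) <= ent p (Lmap W S [eW 1; eW 2; eW 3; eW 4; eS 1 3]%nat) + ent p (Lmap W S [eW 1; eW 2; eW 3; eS 1 2; eS 1 3]%nat)) by (apply (row_sub p M W S B [eW 1; eW 2; eW 3; eS 1 3]%nat (eW 4) (eS 1 2)); auto; try (vm_compute; reflexivity)).
  assert (h42 : ent p (Lmap W S [eW 0; eW 1; eW 3; eW 4; eS 1 0; eS 1 3]%nat) + ent p (Lmap W S [eW 0; eW 1; eW 3; eS 1 0]%nat) <= ent p (Lmap W S [eW 0; eW 1; eW 3; eW 4; eS 1 0]%nat) + ent p (Lmap W S [eW 0; eW 1; eW 3; eS 1 0; eS 1 3]%nat)) by (apply (row_sub p M W S B [eW 0; eW 1; eW 3; eS 1 0]%nat (eW 4) (eS 1 3)); auto; try (vm_compute; reflexivity)).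
  assert (h43 : ent p (Lmap W S [eW 1; eW 2; eW 3; eW 4; eS 1 2; eS 1 3]%nat) + ent p (Lmap W S [eW 1; eW 2; eW 3; eS 1 2]%nat) <= ent p (Lmap W S [eW 1; eW 2; eW 3; eW 4; eS 1 2]%nat) + ent p (Lmap W S [eW 1; eW 2; eW 3; eS 1 2; eS 1 3]%nat)) by (apply (row_sub p M W S B [eW 1; eW 2; eW 3; eS 1 2]%nat (eW 4) (eS 1 3)); auto; try (vm_compute; reflexivity)).
  assert (h44 : ent p (Lmap W S [eW 0; eW 1; eW 2; eW 3; eW 4; eS 1 0; eS 1 2; eS 1 3]%nat) = ent p (Lmap W S [eW 0; eW 1; eW 2; eW 4; eS 1 0; eS 1 2]%nat)) by (apply (ent_eqv p M W S); auto; try (vm_compute; reflexivity)).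
  assert (h45 : ent p (Lmap W S [eW 0; eW 1; eW 2; eW 3; eW 4; eS 1 0; eS 1 2; eS 1 3]%nat) = ent p (Lmap W S [eW 0; eW 1; eW 3; eW 4; eS 1 0; eS 1 3]%nat)) by (apply (ent_eqv p M W S); auto; try (vm_compute; reflexivity)).
  assert (h46 : ent p (Lmap W S [eW 0; eW 1; eW 2; eW 3; eW 4; eS 1 0; eS 1 2; eS 1 3]%nat) = ent p (Lmap W S [eW 1; eW 2; eW 3; eW 4; eS 1 2; eS 1 3]%nat)) by (apply (ent_eqv p M W S); auto; try (vm_compute; reflexivity)).
  assert (h47 : ent p (Lmap W S [eW 0; eW 1; eW 2; eS 1 0; eS 1 2; eS 1 3]%nat) + ent p (Lmap W S [eW 1; eW 2; eS 1 0; eS 1 3]%nat) <= ent p (Lmap W S [eW 0; eW 1; eW 2; eS 1 0; eS 1 3]%nat) + ent p (Lmap W S [eW 1; eW 2; eS 1 0; eS 1 2; eS 1 3]%nat)) by (apply (row_sub p M W S B [eW 1; eW 2; eS 1 0; eS 1 3]%nat (eW 0) (eS 1 2)); auto; try (vm_compute; reflexivity)).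
  assert (h48 : ent p (Lmap W S [eW 0; eW 1; eW 3; eS 1 0; eS 1 2; eS 1 3]%nat) + ent p (Lmap W S [eW 1; eW 3; eS 1 0; eS 1 2]%nat) <= ent p (Lmap W S [eW 0; eW 1; eW 3; eS 1 0; eS 1 2]%nat) + ent p (Lmap W S [eW 1; eW 3; eS 1 0; eS 1 2; eS 1 3]%nat)) by (apply (row_sub p M W S B [eW 1; eW 3; eS 1 0; eS 1 2]%nat (eW 0) (eS 1 3)); auto; try (vm_compute; reflexivity)).
  assert (h49 : ent p (Lmap W S [eW 0; eW 1; eW 2; eS 1 0; eS 1 2; eS 1 3]%nat) + ent p (Lmap W S [eW 0; eW 1; eS 1 2; eS 1 3]%nat) <= ent p (Lmap W S [eW 0; eW 1; eW 2; eS 1 2; eS 1 3]%nat) + ent p (Lmap W S [eW 0; eW 1; eS 1 0; eS 1 2; eS 1 3]%nat)) by (apply (row_sub p M W S B [eW 0; eW 1; eS 1 2; eS 1 3]%nat (eW 2) (eS 1 0)); auto; try (vm_compute; reflexivity)).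
  assert (h50 : ent p (Lmap W S [eW 1; eW 2; eW 3; eS 1 0; eS 1 2; eS 1 3]%nat) + ent p (Lmap W S [eW 1; eW 3; eS 1 0; eS 1 2]%nat) <= ent p (Lmap W S [eW 1; eW 2; eW 3; eS 1 0; eS 1 2]%nat) + ent p (Lmap W S [eW 1; eW 3; eS 1 0; eS 1 2; eS 1 3]%nat)) by (apply (row_sub p M W S B [eW 1; eW 3; eS 1 0; eS 1 2]%nat (eW 2) (eS 1 3)); auto; try (vm_compute; reflexivity)).
  assert (h51 : ent p (Lmap W S [eW 0; eW 1; eW 3; eS 1 0; eS 1 2; eS 1 3]%nat) + ent p (Lmap W S [eW 0; eW 1; eS 1 2; eS 1 3]%nat) <= ent p (Lmap W S [eW 0; eW 1; eW 3; eS 1 2; eS 1 3]%nat) + ent p (Lmap W S [eW 0; eW 1; eS 1 0; eS 1 2; eS 1 3]%nat)) by (apply (row_sub p M W S B [eW 0; eW 1; eS 1 2; eS 1 3]%nat (eW 3) (eS 1 0)); auto; try (vm_compute; reflexivity)).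
  assert (h52 : ent p (Lmap W S [eW 1; eW 2; eW 3; eS 1 0; eS 1 2; eS 1 3]%nat) + ent p (Lmap W S [eW 1; eW 2; eS 1 0; eS 1 3]%nat) <= ent p (Lmap W S [eW 1; eW 2; eW 3; eS 1 0; eS 1 3]%nat) + ent p (Lmap W S [eW 1; eW 2; eS 1 0; eS 1 2; eS 1 3]%nat)) by (apply (row_sub p M W S B [eW 1; eW 2; eS 1 0; eS 1 3]%nat (eW 3) (eS 1 2)); auto; try (vm_compute; reflexivity)).
  assert (h53 : ent p (Lmap W S [eW 4]%nat) = alpha) by (exact (HA 4%nat ltac:(lia))).
  assert (h54 : ent p (Lmap W S [eS 1 0]%nat) = beta) by (exact (HBt 1%nat 0%nat ltac:(lia) ltac:(lia) ltac:(lia))).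
  assert (h55 : ent p (Lmap W S [eS 1 2]%nat) = beta) by (exact (HBt 1%nat 2%nat ltac:(lia) ltac:(lia) ltac:(lia))).
  assert (h56 : ent p (Lmap W S [eS 1 3]%nat) = beta) by (exact (HBt 1%nat 3%nat ltac:(lia) ltac:(lia) ltac:(lia))).
  assert (h57 : ent p (Lmap W S [eW 0; eW 1; eW 3; eS 1 0; eS 1 2]%nat) + ent p (Lmap W S [eW 1; eW 3; eS 1 0]%nat) <= ent p (Lmap W S [eW 0; eW 1; eW 3; eS 1 0]%nat) + ent p (Lmap W S [eW 1; eW 3; eS 1 0; eS 1 2]%nat)) by (apply (row_sub p M W S B [eW 1; eW 3; eS 1 0]%nat (eW 0) (eS 1 2)); auto; try (vm_compute; reflexivity)).
  assert (h58 : ent p (Lmap W S [eW 0; eW 1; eW 2; eS 1 0; eS 1 3]%nat) + ent p (Lmap W S [eW 1; eW 2; eS 1 0]%nat) <= ent p (Lmap W S [eW 0; eW 1; eW 2; eS 1 0]%nat) + ent p (Lmap W S [eW 1; eW 2; eS 1 0; eS 1 3]%nat)) by (apply (row_sub p M W S B [eW 1; eW 2; eS 1 0]%nat (eW 0) (eS 1 3)); auto; try (vm_compute; reflexivity)).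
  assert (h59 : ent p (Lmap W S [eW 1; eW 2; eW 3; eS 1 0; eS 1 2]%nat) + ent p (Lmap W S [eW 1; eW 3; eS 1 2]%nat) <= ent p (Lmap W S [eW 1; eW 2; eW 3; eS 1 2]%nat) + ent p (Lmap W S [eW 1; eW 3; eS 1 0; eS 1 2]%nat)) by (apply (row_sub p M W S B [eW 1; eW 3; eS 1 2]%nat (eW 2) (eS 1 0)); auto; try (vm_compute; reflexivity)).
  assert (h60 : ent p (Lmap W S [eW 0; eW 1; eW 2; eS 1 2; eS 1 3]%nat) + ent p (Lmap W S [eW 0; eW 1; eS 1 2]%nat) <= ent p (Lmap W S [eW 0; eW 1; eW 2; eS 1 2]%nat) + ent p (Lmap W S [eW 0; eW 1; eS 1 2; eS 1 3]%nat)) by (apply (row_sub p M W S B [eW 0; eW 1; eS 1 2]%nat (eW 2) (eS 1 3)); auto; try (vm_compute; reflexivity)).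
  assert (h61 : ent p (Lmap W S [eW 1; eW 2; eW 3; eS 1 0; eS 1 3]%nat) + ent p (Lmap W S [eW 1; eW 2; eS 1 3]%nat) <= ent p (Lmap W S [eW 1; eW 2; eW 3; eS 1 3]%nat) + ent p (Lmap W S [eW 1; eW 2; eS 1 0; eS 1 3]%nat)) by (apply (row_sub p M W S B [eW 1; eW 2; eS 1 3]%nat (eW 3) (eS 1 0)); auto; try (vm_compute; reflexivity)).
  assert (h62 : ent p (Lmap W S [eW 0; eW 1; eW 3; eS 1 2; eS 1 3]%nat) + ent p (Lmap W S [eW 0; eW 1; eS 1 3]%nat) <= ent p (Lmap W S [eW 0; eW 1; eW 3; eS 1 3]%nat) + ent p (Lmap W S [eW 0; eW 1; eS 1 2; eS 1 3]%nat)) by (apply (row_sub p M W S B [eW 0; eW 1; eS 1 3]%nat (eW 3) (eS 1 2)); auto; try (vm_compute; reflexivity)).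
  assert (h63 : ent p (Lmap W S [eW 2; eW 3; eW 4; eS 1 0]%nat) <= ent p (Lmap W S [eW 1; eW 2; eW 3; eS 1 0]%nat) + 1 * beta) by (apply (row_rep p M W S B beta _ _ [eS 0 4]%nat); auto; try (vm_compute; reflexivity); try (simpl; lra)).
  assert (h64 : ent p (Lmap W S [eW 0; eW 3; eW 4; eS 1 2]%nat) <= ent p (Lmap W S [eW 0; eW 1; eW 3; eS 1 2]%nat) + 1 * beta) by (apply (row_rep p M W S B beta _ _ [eS 2 4]%nat); auto; try (vm_compute; reflexivity); try (simpl; lra)).
  assert (h65 : ent p (Lmap W S [eW 0; eW 2; eW 4; eS 1 3]%nat) <= ent p (Lmap W S [eW 0; eW 1; eW 2; eS 1 3]%nat) + 1 * beta) by (apply (row_rep p M W S B beta _ _ [eS 3 4]%nat); auto; try (vm_compute; reflexivity); try (simpl; lra)).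
  assert (h66 : ent p (Lmap W S [eW 0; eW 1; eW 2; eW 3; eS 1 0; eS 1 2]%nat) <= ent p (Lmap W S [eW 0; eW 1; eW 2; eS 1 0; eS 1 2]%nat) + 1 * beta) by (apply (row_rep p M W S B beta _ _ [eS 4 3]%nat); auto; try (vm_compute; reflexivity); try (simpl; lra)).
  assert (h67 : ent p (Lmap W S [eW 0; eW 1; eW 2; eW 3; eS 1 0; eS 1 3]%nat) <= ent p (Lmap W S [eW 0; eW 1; eW 3; eS 1 0; eS 1 3]%nat) + 1 * beta) by (apply (row_rep p M W S B beta _ _ [eS 4 2]%nat); auto; try (vm_compute; reflexivity); try (simpl; lra)).
  assert (h68 : ent p (Lmap W S [eW 0; eW 1; eW 2; eW 3; eS 1 2; eS 1 3]%nat) <= ent p (Lmap W S [eW 1; eW 2; eW 3; eS 1 2; eS 1 3]%nat) + 1 * beta) by (apply (row_rep p M W S B beta _ _ [eS 4 0]%nat); auto; try (vm_compute; reflexivity); try (simpl; lra)).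
  assert (h69 : ent p (Lmap W S [eW 3; eS 1 0; eS 1 2]%nat) + ent p (Lmap W S [eW 3]%nat) <= ent p (Lmap W S [eW 3; eS 1 0]%nat) + ent p (Lmap W S [eW 3; eS 1 2]%nat)) by (apply (row_sub p M W S B [eW 3]%nat (eS 1 0) (eS 1 2)); auto; try (vm_compute; reflexivity)).
  assert (h70 : ent p (Lmap W S [eW 2; eS 1 0; eS 1 3]%nat) + ent p (Lmap W S [eW 2]%nat) <= ent p (Lmap W S [eW 2; eS 1 0]%nat) + ent p (Lmap W S [eW 2; eS 1 3]%nat)) by (apply (row_sub p M W S B [eW 2]%nat (eS 1 0) (eS 1 3)); auto; try (vm_compute; reflexivity)).
  assert (h71 : ent p (Lmap W S [eW 0; eS 1 2; eS 1 3]%nat) + ent p (Lmap W S [eW 0]%nat) <= ent p (Lmap W S [eW 0; eS 1 2]%nat) + ent p (Lmap W S [eW 0; eS 1 3]%nat)) by (apply (row_sub p M W S B [eW 0]%nat (eS 1 2) (eS 1 3)); auto; try (vm_compute; reflexivity)).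
  assert (h72 : ent p (Lmap W S [eW 0; eS 1 0; eS 1 2; eS 1 3]%nat) + ent p (Lmap W S [eS 1 0; eS 1 3]%nat) <= ent p (Lmap W S [eW 0; eS 1 0; eS 1 3]%nat) + ent p (Lmap W S [eS 1 0; eS 1 2; eS 1 3]%nat)) by (apply (row_sub p M W S B [eS 1 0; eS 1 3]%nat (eW 0) (eS 1 2)); auto; try (vm_compute; reflexivity)).
  assert (h73 : ent p (Lmap W S [eW 0; eS 1 0; eS 1 2; eS 1 3]%nat) + ent p (Lmap W S [eS 1 0; eS 1 2]%nat) <= ent p (Lmap W S [eW 0; eS 1 0; eS 1 2]%nat) + ent p (Lmap W S [eS 1 0; eS 1 2; eS 1 3]%nat)) by (apply (row_sub p M W S B [eS 1 0; eS 1 2]%nat (eW 0) (eS 1 3)); auto; try (vm_compute; reflexivity)).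
  assert (h74 : ent p (Lmap W S [eW 2; eS 1 0; eS 1 2; eS 1 3]%nat) + ent p (Lmap W S [eS 1 2; eS 1 3]%nat) <= ent p (Lmap W S [eW 2; eS 1 2; eS 1 3]%nat) + ent p (Lmap W S [eS 1 0; eS 1 2; eS 1 3]%nat)) by (apply (row_sub p M W S B [eS 1 2; eS 1 3]%nat (eW 2) (eS 1 0)); auto; try (vm_compute; reflexivity)).
  assert (h75 : ent p (Lmap W S [eW 2; eS 1 0; eS 1 2; eS 1 3]%nat) + ent p (Lmap W S [eS 1 0; eS 1 2]%nat) <= ent p (Lmap W S [eW 2; eS 1 0; eS 1 2]%nat) + ent p (Lmap W S [eS 1 0; eS 1 2; eS 1 3]%nat)) by (apply (row_sub p M W S B [eS 1 0; eS 1 2]%nat (eW 2) (eS 1 3)); auto; try (vm_compute; reflexivity)).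
  assert (h76 : ent p (Lmap W S [eW 3; eS 1 0; eS 1 2; eS 1 3]%nat) + ent p (Lmap W S [eS 1 2; eS 1 3]%nat) <= ent p (Lmap W S [eW 3; eS 1 2; eS 1 3]%nat) + ent p (Lmap W S [eS 1 0; eS 1 2; eS 1 3]%nat)) by (apply (row_sub p M W S B [eS 1 2; eS 1 3]%nat (eW 3) (eS 1 0)); auto; try (vm_compute; reflexivity)).
  assert (h77 : ent p (Lmap W S [eW 3; eS 1 0; eS 1 2; eS 1 3]%nat) + ent p (Lmap W S [eS 1 0; eS 1 3]%nat) <= ent p (Lmap W S [eW 3; eS 1 0; eS 1 3]%nat) + ent p (Lmap W S [eS 1 0; eS 1 2; eS 1 3]%nat)) by (apply (row_sub p M W S B [eS 1 0; eS 1 3]%nat (eW 3) (eS 1 2)); auto; try (vm_compute; reflexivity)).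
  assert (h78 : ent p (Lmap W S [eW 1]%nat) = alpha) by (exact (HA 1%nat ltac:(lia))).
  assert (h79 : ent p (Lmap W S [eW 0; eW 2; eW 3; eS 1 0]%nat) <= ent p (Lmap W S [eW 2; eW 3; eS 1 0]%nat) + 1 * beta) by (apply (row_rep p M W S B beta _ _ [eS 4 0]%nat); auto; try (vm_compute; reflexivity); try (simpl; lra)).
  assert (h80 : ent p (Lmap W S [eW 0; eW 2; eW 3; eS 1 2]%nat) <= ent p (Lmap W S [eW 0; eW 3; eS 1 2]%nat) + 1 * beta) by (apply (row_rep p M W S B beta _ _ [eS 4 2]%nat); auto; try (vm_compute; reflexivity); try (simpl; lra)).
  assert (h81 : ent p (Lmap W S [eW 0; eW 2; eW 3; eS 1 3]%nat) <= ent p (Lmap W S [eW 0; eW 2; eS 1 3]%nat) + 1 * beta) by (apply (row_rep p M W S B beta _ _ [eS 4 3]%nat); auto; try (vm_compute; reflexivity); try (simpl; lra)).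
  assert (h82 : ent p (Lmap W S [eW 0; eW 1; eW 2; eW 3; eW 4; eS 1 0; eS 1 2; eS 1 3]%nat) = ent p (Lmap W S [eW 0; eW 2; eW 3; eW 4]%nat)) by (apply (ent_eqv p M W S); auto; try (vm_compute; reflexivity)).
  assert (h83 : ent p (Lmap W S [eW 0; eW 1; eW 2; eW 3; eW 4; eS 1 0; eS 1 2; eS 1 3]%nat) + ent p (Lmap W S [eW 0; eW 2; eW 3; eW 4; eS 1 2; eS 1 3]%nat) <= ent p (Lmap W S [eW 0; eW 1; eW 2; eW 3; eW 4; eS 1 2; eS 1 3]%nat) + ent p (Lmap W S [eW 0; eW 2; eW 3; eW 4; eS 1 0; eS 1 2; eS 1 3]%nat)) by (apply (row_sub p M W S B [eW 0; eW 2; eW 3; eW 4; eS 1 2; eS 1 3]%nat (eW 1) (eS 1 0)); auto; try (vm_compute; reflexivity)).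
  assert (h84 : ent p (Lmap W S [eW 0; eW 1; eW 2; eW 3; eW 4; eS 1 0; eS 1 2; eS 1 3]%nat) + ent p (Lmap W S [eW 0; eW 2; eW 3; eW 4; eS 1 0; eS 1 3]%nat) <= ent p (Lmap W S [eW 0; eW 1; eW 2; eW 3; eW 4; eS 1 0; eS 1 3]%nat) + ent p (Lmap W S [eW 0; eW 2; eW 3; eW 4; eS 1 0; eS 1 2; eS 1 3]%nat)) by (apply (row_sub p M W S B [eW 0; eW 2; eW 3; eW 4; eS 1 0; eS 1 3]%nat (eW 1) (eS 1 2)); auto; try (vm_compute; reflexivity)).
  assert (h85 : ent p (Lmap W S [eW 0; eW 1; eW 2; eW 3; eW 4; eS 1 0; eS 1 2; eS 1 3]%nat) + ent p (Lmap W S [eW 0; eW 2; eW 3; eW 4; eS 1 0; eS 1 2]%nat) <= ent p (Lmap W S [eW 0; eW 1; eW 2; eW 3; eW 4; eS 1 0; eS 1 2]%nat) + ent p (Lmap W S [eW 0; eW 2; eW 3; eW 4; eS 1 0; eS 1 2; eS 1 3]%nat)) by (apply (row_sub p M W S B [eW 0; eW 2; eW 3; eW 4; eS 1 0; eS 1 2]%nat (eW 1) (eS 1 3)); auto; try (vm_compute; reflexivity)).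
  assert (h86 : ent p (Lmap W S [eW 1; eS 1 0; eS 1 2]%nat) = ent p (Lmap W S [eW 1; eS 1 0]%nat)) by (apply (ent_eqv p M W S); auto; try (vm_compute; reflexivity)).
  assert (h87 : ent p (Lmap W S [eW 1; eS 1 0; eS 1 3]%nat) = ent p (Lmap W S [eW 1; eS 1 0]%nat)) by (apply (ent_eqv p M W S); auto; try (vm_compute; reflexivity)).
  assert (h88 : ent p (Lmap W S [eW 1; eS 1 0; eS 1 2]%nat) = ent p (Lmap W S [eW 1; eS 1 2]%nat)) by (apply (ent_eqv p M W S); auto; try (vm_compute; reflexivity)).
  assert (h89 : ent p (Lmap W S [eW 1; eS 1 2; eS 1 3]%nat) = ent p (Lmap W S [eW 1; eS 1 2]%nat)) by (apply (ent_eqv p M W S); auto; try (vm_compute; reflexivity)).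
  assert (h90 : ent p (Lmap W S [eW 1; eS 1 0; eS 1 3]%nat) = ent p (Lmap W S [eW 1; eS 1 3]%nat)) by (apply (ent_eqv p M W S); auto; try (vm_compute; reflexivity)).
  assert (h91 : ent p (Lmap W S [eW 1; eS 1 2; eS 1 3]%nat) = ent p (Lmap W S [eW 1; eS 1 3]%nat)) by (apply (ent_eqv p M W S); auto; try (vm_compute; reflexivity)).
  assert (h92 : ent p (Lmap W S [eW 0; eS 1 2]%nat) + ent p (Lmap W S (@nil el)) <= ent p (Lmap W S [eW 0]%nat) + ent p (Lmap W S [eS 1 2]%nat)) by (apply (row_sub p M W S B (@nil el) (eW 0) (eS 1 2)); auto; try (vm_compute; reflexivity)).
  assert (h93 : ent p (Lmap W S [eW 0; eS 1 3]%nat) + ent p (Lmap W S (@nil el)) <= ent p (Lmap W S [eW 0]%nat) + ent p (Lmap W S [eS 1 3]%nat)) by (apply (row_sub p M W S B (@nil el) (eW 0) (eS 1 3)); auto; try (vm_compute; reflexivity)).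
  assert (h94 : ent p (Lmap W S [eW 2; eS 1 0]%nat) + ent p (Lmap W S (@nil el)) <= ent p (Lmap W S [eW 2]%nat) + ent p (Lmap W S [eS 1 0]%nat)) by (apply (row_sub p M W S B (@nil el) (eW 2) (eS 1 0)); auto; try (vm_compute; reflexivity)).
  assert (h95 : ent p (Lmap W S [eW 2; eS 1 3]%nat) + ent p (Lmap W S (@nil el)) <= ent p (Lmap W S [eW 2]%nat) + ent p (Lmap W S [eS 1 3]%nat)) by (apply (row_sub p M W S B (@nil el) (eW 2) (eS 1 3)); auto; try (vm_compute; reflexivity)).
  assert (h96 : ent p (Lmap W S [eW 3; eS 1 0]%nat) + ent p (Lmap W S (@nil el)) <= ent p (Lmap W S [eW 3]%nat) + ent p (Lmap W S [eS 1 0]%nat)) by (apply (row_sub p M W S B (@nil el) (eW 3) (eS 1 0)); auto; try (vm_compute; reflexivity)).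
  assert (h97 : ent p (Lmap W S [eW 3; eS 1 2]%nat) + ent p (Lmap W S (@nil el)) <= ent p (Lmap W S [eW 3]%nat) + ent p (Lmap W S [eS 1 2]%nat)) by (apply (row_sub p M W S B (@nil el) (eW 3) (eS 1 2)); auto; try (vm_compute; reflexivity)).
  assert (h98 : ent p (Lmap W S [eW 0; eW 1; eW 2; eS 1 0; eS 1 3]%nat) = ent p (Lmap W S [eW 0; eW 1; eW 2; eS 1 0]%nat)) by (apply (ent_eqv p M W S); auto; try (vm_compute; reflexivity)).
  assert (h99 : ent p (Lmap W S [eW 0; eW 1; eW 3; eS 1 0; eS 1 2]%nat) = ent p (Lmap W S [eW 0; eW 1; eW 3; eS 1 0]%nat)) by (apply (ent_eqv p M W S); auto; try (vm_compute; reflexivity)).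
  assert (h100 : ent p (Lmap W S [eW 0; eW 1; eW 2; eS 1 2; eS 1 3]%nat) = ent p (Lmap W S [eW 0; eW 1; eW 2; eS 1 2]%nat)) by (apply (ent_eqv p M W S); auto; try (vm_compute; reflexivity)).
  assert (h101 : ent p (Lmap W S [eW 1; eW 2; eW 3; eS 1 0; eS 1 2]%nat) = ent p (Lmap W S [eW 1; eW 2; eW 3; eS 1 2]%nat)) by (apply (ent_eqv p M W S); auto; try (vm_compute; reflexivity)).
  assert (h102 : ent p (Lmap W S [eW 0; eW 1; eW 3; eS 1 2; eS 1 3]%nat) = ent p (Lmap W S [eW 0; eW 1; eW 3; eS 1 3]%nat)) by (apply (ent_eqv p M W S); auto; try (vm_compute; reflexivity)).
  assert (h103 : ent p (Lmap W S [eW 1; eW 2; eW 3; eS 1 0; eS 1 3]%nat) = ent p (Lmap W S [eW 1; eW 2; eW 3; eS 1 3]%nat)) by (apply (ent_eqv p M W S); auto; try (vm_compute; reflexivity)).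
  assert (h104 : ent p (Lmap W S [eW 0; eW 1; eW 2; eW 3; eW 4; eS 1 0]%nat) + ent p (Lmap W S [eW 0; eW 2; eW 3; eW 4]%nat) <= ent p (Lmap W S [eW 0; eW 1; eW 2; eW 3; eW 4]%nat) + ent p (Lmap W S [eW 0; eW 2; eW 3; eW 4; eS 1 0]%nat)) by (apply (row_sub p M W S B [eW 0; eW 2; eW 3; eW 4]%nat (eW 1) (eS 1 0)); auto; try (vm_compute; reflexivity)).
  assert (h105 : ent p (Lmap W S [eW 0; eW 1; eW 2; eW 3; eW 4; eS 1 2]%nat) + ent p (Lmap W S [eW 0; eW 2; eW 3; eW 4]%nat) <= ent p (Lmap W S [eW 0; eW 1; eW 2; eW 3; eW 4]%nat) + ent p (Lmap W S [eW 0; eW 2; eW 3; eW 4; eS 1 2]%nat)) by (apply (row_sub p M W S B [eW 0; eW 2; eW 3; eW 4]%nat (eW 1) (eS 1 2)); auto; try (vm_compute; reflexivity)).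
  assert (h106 : ent p (Lmap W S [eW 0; eW 1; eW 2; eW 3; eW 4; eS 1 3]%nat) + ent p (Lmap W S [eW 0; eW 2; eW 3; eW 4]%nat) <= ent p (Lmap W S [eW 0; eW 1; eW 2; eW 3; eW 4]%nat) + ent p (Lmap W S [eW 0; eW 2; eW 3; eW 4; eS 1 3]%nat)) by (apply (row_sub p M W S B [eW 0; eW 2; eW 3; eW 4]%nat (eW 1) (eS 1 3)); auto; try (vm_compute; reflexivity)).
  assert (h107 : ent p (Lmap W S [eW 1; eS 1 0; eS 1 2; eS 1 3]%nat) + ent p (Lmap W S [eW 1; eS 1 3]%nat) <= ent p (Lmap W S [eW 1; eS 1 0; eS 1 3]%nat) + ent p (Lmap W S [eW 1; eS 1 2; eS 1 3]%nat)) by (apply (row_sub p M W S B [eW 1; eS 1 3]%nat (eS 1 0) (eS 1 2)); auto; try (vm_compute; reflexivity)).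
  assert (h108 : ent p (Lmap W S [eW 1; eS 1 0; eS 1 2; eS 1 3]%nat) + ent p (Lmap W S [eW 1; eS 1 2]%nat) <= ent p (Lmap W S [eW 1; eS 1 0; eS 1 2]%nat) + ent p (Lmap W S [eW 1; eS 1 2; eS 1 3]%nat)) by (apply (row_sub p M W S B [eW 1; eS 1 2]%nat (eS 1 0) (eS 1 3)); auto; try (vm_compute; reflexivity)).
  assert (h109 : ent p (Lmap W S [eW 1; eS 1 0; eS 1 2; eS 1 3]%nat) + ent p (Lmap W S [eW 1; eS 1 0]%nat) <= ent p (Lmap W S [eW 1; eS 1 0; eS 1 2]%nat) + ent p (Lmap W S [eW 1; eS 1 0; eS 1 3]%nat)) by (apply (row_sub p M W S B [eW 1; eS 1 0]%nat (eS 1 2) (eS 1 3)); auto; try (vm_compute; reflexivity)).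
  assert (h110 : ent p (Lmap W S [eW 0; eW 1; eS 1 0; eS 1 2]%nat) + ent p (Lmap W S [eW 0; eW 1]%nat) <= ent p (Lmap W S [eW 0; eW 1; eS 1 0]%nat) + ent p (Lmap W S [eW 0; eW 1; eS 1 2]%nat)) by (apply (row_sub p M W S B [eW 0; eW 1]%nat (eS 1 0) (eS 1 2)); auto; try (vm_compute; reflexivity)).
  assert (h111 : ent p (Lmap W S [eW 0; eW 1; eS 1 0; eS 1 3]%nat) + ent p (Lmap W S [eW 0; eW 1]%nat) <= ent p (Lmap W S [eW 0; eW 1; eS 1 0]%nat) + ent p (Lmap W S [eW 0; eW 1; eS 1 3]%nat)) by (apply (row_sub p M W S B [eW 0; eW 1]%nat (eS 1 0) (eS 1 3)); auto; try (vm_compute; reflexivity)).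
  assert (h112 : ent p (Lmap W S [eW 1; eW 2; eS 1 0; eS 1 2]%nat) + ent p (Lmap W S [eW 1; eW 2]%nat) <= ent p (Lmap W S [eW 1; eW 2; eS 1 0]%nat) + ent p (Lmap W S [eW 1; eW 2; eS 1 2]%nat)) by (apply (row_sub p M W S B [eW 1; eW 2]%nat (eS 1 0) (eS 1 2)); auto; try (vm_compute; reflexivity)).
  assert (h113 : ent p (Lmap W S [eW 1; eW 2; eS 1 2; eS 1 3]%nat) + ent p (Lmap W S [eW 1; eW 2]%nat) <= ent p (Lmap W S [eW 1; eW 2; eS 1 2]%nat) + ent p (Lmap W S [eW 1; eW 2; eS 1 3]%nat)) by (apply (row_sub p M W S B [eW 1; eW 2]%nat (eS 1 2) (eS 1 3)); auto; try (vm_compute; reflexivity)).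
  assert (h114 : ent p (Lmap W S [eW 1; eW 3; eS 1 0; eS 1 3]%nat) + ent p (Lmap W S [eW 1; eW 3]%nat) <= ent p (Lmap W S [eW 1; eW 3; eS 1 0]%nat) + ent p (Lmap W S [eW 1; eW 3; eS 1 3]%nat)) by (apply (row_sub p M W S B [eW 1; eW 3]%nat (eS 1 0) (eS 1 3)); auto; try (vm_compute; reflexivity)).
  assert (h115 : ent p (Lmap W S [eW 1; eW 3; eS 1 2; eS 1 3]%nat) + ent p (Lmap W S [eW 1; eW 3]%nat) <= ent p (Lmap W S [eW 1; eW 3; eS 1 2]%nat) + ent p (Lmap W S [eW 1; eW 3; eS 1 3]%nat)) by (apply (row_sub p M W S B [eW 1; eW 3]%nat (eS 1 2) (eS 1 3)); auto; try (vm_compute; reflexivity)).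
  assert (h116 : ent p (Lmap W S [eW 0; eW 1; eW 2; eW 4; eS 1 0; eS 1 3]%nat) + ent p (Lmap W S [eW 0; eW 1; eW 2; eS 1 3]%nat) <= ent p (Lmap W S [eW 0; eW 1; eW 2; eW 4; eS 1 3]%nat) + ent p (Lmap W S [eW 0; eW 1; eW 2; eS 1 0; eS 1 3]%nat)) by (apply (row_sub p M W S B [eW 0; eW 1; eW 2; eS 1 3]%nat (eW 4) (eS 1 0)); auto; try (vm_compute; reflexivity)).
  assert (h117 : ent p (Lmap W S [eW 0; eW 1; eW 3; eW 4; eS 1 0; eS 1 2]%nat) + ent p (Lmap W S [eW 0; eW 1; eW 3; eS 1 2]%nat) <= ent p (Lmap W S [eW 0; eW 1; eW 3; eW 4; eS 1 2]%nat) + ent p (Lmap W S [eW 0; eW 1; eW 3; eS 1 0; eS 1 2]%nat)) by (apply (row_sub p M W S B [eW 0; eW 1; eW 3; eS 1 2]%nat (eW 4) (eS 1 0)); auto; try (vm_compute; reflexivity)).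
  assert (h118 : ent p (Lmap W S [eW 0; eW 1; eW 2; eW 4; eS 1 2; eS 1 3]%nat) + ent p (Lmap W S [eW 0; eW 1; eW 2; eS 1 3]%nat) <= ent p (Lmap W S [eW 0; eW 1; eW 2; eW 4; eS 1 3]%nat) + ent p (Lmap W S [eW 0; eW 1; eW 2; eS 1 2; eS 1 3]%nat)) by (apply (row_sub p M W S B [eW 0; eW 1; eW 2; eS 1 3]%nat (eW 4) (eS 1 2)); auto; try (vm_compute; reflexivity)).
  assert (h119 : ent p (Lmap W S [eW 1; eW 2; eW 3; eW 4; eS 1 0; eS 1 2]%nat) + ent p (Lmap W S [eW 1; eW 2; eW 3; eS 1 0]%nat) <= ent p (Lmap W S [eW 1; eW 2; eW 3; eW 4; eS 1 0]%nat) + ent p (Lmap W S [eW 1; eW 2; eW 3; eS 1 0; eS 1 2]%nat)) by (apply (row_sub p M W S B [eW 1; eW 2; eW 3; eS 1 0]%nat (eW 4) (eS 1 2)); auto; try (vm_compute; reflexivity)).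
  assert (h120 : ent p (Lmap W S [eW 0; eW 1; eW 3; eW 4; eS 1 2; eS 1 3]%nat) + ent p (Lmap W S [eW 0; eW 1; eW 3; eS 1 2]%nat) <= ent p (Lmap W S [eW 0; eW 1; eW 3; eW 4; eS 1 2]%nat) + ent p (Lmap W S [eW 0; eW 1; eW 3; eS 1 2; eS 1 3]%nat)) by (apply (row_sub p M W S B [eW 0; eW 1; eW 3; eS 1 2]%nat (eW 4) (eS 1 3)); auto; try (vm_compute; reflexivity)).
  assert (h121 : ent p (Lmap W S [eW 1; eW 2; eW 3; eW 4; eS 1 0; eS 1 3]%nat) + ent p (Lmap W S [eW 1; eW 2; eW 3; eS 1 0]%nat) <= ent p (Lmap W S [eW 1; eW 2; eW 3; eW 4; eS 1 0]%nat) + ent p (Lmap W S [eW 1; eW 2; eW 3; eS 1 0; eS 1 3]%nat)) by (apply (row_sub p M W S B [eW 1; eW 2; eW 3; eS 1 0]%nat (eW 4) (eS 1 3)); auto; try (vm_compute; reflexivity)).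
  assert (h122 : ent p (Lmap W S [eW 0; eW 1; eW 2; eW 3; eS 1 0; eS 1 2; eS 1 3]%nat) + ent p (Lmap W S [eW 0; eW 1; eW 2; eW 3; eS 1 3]%nat) <= ent p (Lmap W S [eW 0; eW 1; eW 2; eW 3; eS 1 0; eS 1 3]%nat) + ent p (Lmap W S [eW 0; eW 1; eW 2; eW 3; eS 1 2; eS 1 3]%nat)) by (apply (row_sub p M W S B [eW 0; eW 1; eW 2; eW 3; eS 1 3]%nat (eS 1 0) (eS 1 2)); auto; try (vm_compute; reflexivity)).
  assert (h123 : ent p (Lmap W S [eW 0; eW 1; eW 2; eW 3; eS 1 0; eS 1 2; eS 1 3]%nat) + ent p (Lmap W S [eW 0; eW 1; eW 2; eW 3; eS 1 2]%nat) <= ent p (Lmap W S [eW 0; eW 1; eW 2; eW 3; eS 1 0; eS 1 2]%nat) + ent p (Lmap W S [eW 0; eW 1; eW 2; eW 3; eS 1 2; eS 1 3]%nat)) by (apply (row_sub p M W S B [eW 0; eW 1; eW 2; eW 3; eS 1 2]%nat (eS 1 0) (eS 1 3)); auto; try (vm_compute; reflexivity)).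
  assert (h124 : ent p (Lmap W S [eW 0; eW 1; eW 2; eW 3; eS 1 0; eS 1 2; eS 1 3]%nat) + ent p (Lmap W S [eW 0; eW 1; eW 2; eW 3; eS 1 0]%nat) <= ent p (Lmap W S [eW 0; eW 1; eW 2; eW 3; eS 1 0; eS 1 2]%nat) + ent p (Lmap W S [eW 0; eW 1; eW 2; eW 3; eS 1 0; eS 1 3]%nat)) by (apply (row_sub p M W S B [eW 0; eW 1; eW 2; eW 3; eS 1 0]%nat (eS 1 2) (eS 1 3)); auto; try (vm_compute; reflexivity)).
  assert (h125 : ent p (Lmap W S [eW 0; eW 1; eS 1 0]%nat) + ent p (Lmap W S [eS 1 0]%nat) <= ent p (Lmap W S [eW 0; eS 1 0]%nat) + ent p (Lmap W S [eW 1; eS 1 0]%nat)) by (apply (row_sub p M W S B [eS 1 0]%nat (eW 0) (eW 1)); auto; try (vm_compute; reflexivity)).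
  assert (h126 : ent p (Lmap W S [eW 1; eW 2; eS 1 2]%nat) + ent p (Lmap W S [eS 1 2]%nat) <= ent p (Lmap W S [eW 1; eS 1 2]%nat) + ent p (Lmap W S [eW 2; eS 1 2]%nat)) by (apply (row_sub p M W S B [eS 1 2]%nat (eW 1) (eW 2)); auto; try (vm_compute; reflexivity)).
  assert (h127 : ent p (Lmap W S [eW 1; eW 3; eS 1 3]%nat) + ent p (Lmap W S [eS 1 3]%nat) <= ent p (Lmap W S [eW 1; eS 1 3]%nat) + ent p (Lmap W S [eW 3; eS 1 3]%nat)) by (apply (row_sub p M W S B [eS 1 3]%nat (eW 1) (eW 3)); auto; try (vm_compute; reflexivity)).
  assert (h128 : ent p (Lmap W S [eW 4; eS 1 0]%nat) + ent p (Lmap W S (@nil el)) <= ent p (Lmap W S [eW 4]%nat) + ent p (Lmap W S [eS 1 0]%nat)) by (apply (row_sub p M W S B (@nil el) (eW 4) (eS 1 0)); auto; try (vm_compute; reflexivity)).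
  assert (h129 : ent p (Lmap W S [eW 4; eS 1 2]%nat) + ent p (Lmap W S (@nil el)) <= ent p (Lmap W S [eW 4]%nat) + ent p (Lmap W S [eS 1 2]%nat)) by (apply (row_sub p M W S B (@nil el) (eW 4) (eS 1 2)); auto; try (vm_compute; reflexivity)).
  assert (h130 : ent p (Lmap W S [eW 4; eS 1 3]%nat) + ent p (Lmap W S (@nil el)) <= ent p (Lmap W S [eW 4]%nat) + ent p (Lmap W S [eS 1 3]%nat)) by (apply (row_sub p M W S B (@nil el) (eW 4) (eS 1 3)); auto; try (vm_compute; reflexivity)).
  assert (h131 : ent p (Lmap W S [eW 0; eW 1; eW 2; eW 3; eS 1 0]%nat) + ent p (Lmap W S [eW 1; eW 2; eW 3]%nat) <= ent p (Lmap W S [eW 0; eW 1; eW 2; eW 3]%nat) + ent p (Lmap W S [eW 1; eW 2; eW 3; eS 1 0]%nat)) by (apply (row_sub p M W S B [eW 1; eW 2; eW 3]%nat (eW 0) (eS 1 0)); auto; try (vm_compute; reflexivity)).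
  assert (h132 : ent p (Lmap W S [eW 0; eW 1; eW 2; eW 3; eS 1 2]%nat) + ent p (Lmap W S [eW 0; eW 1; eW 3]%nat) <= ent p (Lmap W S [eW 0; eW 1; eW 2; eW 3]%nat) + ent p (Lmap W S [eW 0; eW 1; eW 3; eS 1 2]%nat)) by (apply (row_sub p M W S B [eW 0; eW 1; eW 3]%nat (eW 2) (eS 1 2)); auto; try (vm_compute; reflexivity)).
  assert (h133 : ent p (Lmap W S [eW 0; eW 1; eW 2; eW 3; eS 1 3]%nat) + ent p (Lmap W S [eW 0; eW 1; eW 2]%nat) <= ent p (Lmap W S [eW 0; eW 1; eW 2; eW 3]%nat) + ent p (Lmap W S [eW 0; eW 1; eW 2; eS 1 3]%nat)) by (apply (row_sub p M W S B [eW 0; eW 1; eW 2]%nat (eW 3) (eS 1 3)); auto; try (vm_compute; reflexivity)).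
  assert (h134 : ent p (Lmap W S [eW 0; eW 1; eW 2; eS 1 0]%nat) = ent p (Lmap W S [eW 0; eW 1; eW 2]%nat)) by (apply (ent_eqv p M W S); auto; try (vm_compute; reflexivity)).
  assert (h135 : ent p (Lmap W S [eW 0; eW 1; eW 3; eS 1 0]%nat) = ent p (Lmap W S [eW 0; eW 1; eW 3]%nat)) by (apply (ent_eqv p M W S); auto; try (vm_compute; reflexivity)).
  assert (h136 : ent p (Lmap W S [eW 0; eW 1; eW 2; eS 1 2]%nat) = ent p (Lmap W S [eW 0; eW 1; eW 2]%nat)) by (apply (ent_eqv p M W S); auto; try (vm_compute; reflexivity)).
  assert (h137 : ent p (Lmap W S [eW 1; eW 2; eW 3; eS 1 2]%nat) = ent p (Lmap W S [eW 1; eW 2; eW 3]%nat)) by (apply (ent_eqv p M W S); auto; try (vm_compute; reflexivity)).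
  assert (h138 : ent p (Lmap W S [eW 0; eW 1; eW 3; eS 1 3]%nat) = ent p (Lmap W S [eW 0; eW 1; eW 3]%nat)) by (apply (ent_eqv p M W S); auto; try (vm_compute; reflexivity)).
  assert (h139 : ent p (Lmap W S [eW 1; eW 2; eW 3; eS 1 3]%nat) = ent p (Lmap W S [eW 1; eW 2; eW 3]%nat)) by (apply (ent_eqv p M W S); auto; try (vm_compute; reflexivity)).
  assert (h140 : ent p (Lmap W S [eW 1; eS 1 0]%nat) = ent p (Lmap W S [eW 1]%nat)) by (apply (ent_eqv p M W S); auto; try (vm_compute; reflexivity)).
  assert (h141 : ent p (Lmap W S [eW 1; eS 1 2]%nat) = ent p (Lmap W S [eW 1]%nat)) by (apply (ent_eqv p M W S); auto; try (vm_compute; reflexivity)).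
  assert (h142 : ent p (Lmap W S [eW 1; eS 1 3]%nat) = ent p (Lmap W S [eW 1]%nat)) by (apply (ent_eqv p M W S); auto; try (vm_compute; reflexivity)).
  assert (h143 : ent p (Lmap W S [eW 0; eW 1; eW 2; eW 4; eS 1 0]%nat) <= ent p (Lmap W S [eW 0; eW 1; eW 2; eW 3; eS 1 0]%nat) + 0 * beta) by (apply (row_rep p M W S B beta _ _ (@nil el)); auto; try (vm_compute; reflexivity); try (simpl; lra)).
  assert (h144 : ent p (Lmap W S [eW 0; eW 1; eW 3; eW 4; eS 1 0]%nat) <= ent p (Lmap W S [eW 0; eW 1; eW 2; eW 3; eS 1 0]%nat) + 0 * beta) by (apply (row_rep p M W S B beta _ _ (@nil el)); auto; try (vm_compute; reflexivity); try (simpl; lra)).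
  assert (h145 : ent p (Lmap W S [eW 0; eW 1; eW 2; eW 4; eS 1 2]%nat) <= ent p (Lmap W S [eW 0; eW 1; eW 2; eW 3; eS 1 2]%nat) + 0 * beta) by (apply (row_rep p M W S B beta _ _ (@nil el)); auto; try (vm_compute; reflexivity); try (simpl; lra)).
  assert (h146 : ent p (Lmap W S [eW 1; eW 2; eW 3; eW 4; eS 1 2]%nat) <= ent p (Lmap W S [eW 0; eW 1; eW 2; eW 3; eS 1 2]%nat) + 0 * beta) by (apply (row_rep p M W S B beta _ _ (@nil el)); auto; try (vm_compute; reflexivity); try (simpl; lra)).
  assert (h147 : ent p (Lmap W S [eW 0; eW 1; eW 3; eW 4; eS 1 3]%nat) <= ent p (Lmap W S [eW 0; eW 1; eW 2; eW 3; eS 1 3]%nat) + 0 * beta) by (apply (row_rep p M W S B beta _ _ (@nil el)); auto; try (vm_compute; reflexivity); try (simpl; lra)).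
  assert (h148 : ent p (Lmap W S [eW 1; eW 2; eW 3; eW 4; eS 1 3]%nat) <= ent p (Lmap W S [eW 0; eW 1; eW 2; eW 3; eS 1 3]%nat) + 0 * beta) by (apply (row_rep p M W S B beta _ _ (@nil el)); auto; try (vm_compute; reflexivity); try (simpl; lra)).
  assert (h149 : ent p (Lmap W S [eW 0; eW 4; eS 1 0]%nat) <= ent p (Lmap W S [eW 4; eS 1 0]%nat) + 2 * beta) by (apply (row_rep p M W S B beta _ _ [eS 2 0; eS 3 0]%nat); auto; try (vm_compute; reflexivity); try (simpl; lra)).
  assert (h150 : ent p (Lmap W S [eW 2; eW 4; eS 1 2]%nat) <= ent p (Lmap W S [eW 4; eS 1 2]%nat) + 2 * beta) by (apply (row_rep p M W S B beta _ _ [eS 0 2; eS 3 2]%nat); auto; try (vm_compute; reflexivity); try (simpl; lra)).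
  assert (h151 : ent p (Lmap W S [eW 3; eW 4; eS 1 3]%nat) <= ent p (Lmap W S [eW 4; eS 1 3]%nat) + 2 * beta) by (apply (row_rep p M W S B beta _ _ [eS 0 3; eS 2 3]%nat); auto; try (vm_compute; reflexivity); try (simpl; lra)).
  assert (h152 : ent p (Lmap W S [eW 0; eW 1; eS 1 0; eS 1 2]%nat) + ent p (Lmap W S [eW 1; eS 1 2]%nat) <= ent p (Lmap W S [eW 0; eW 1; eS 1 2]%nat) + ent p (Lmap W S [eW 1; eS 1 0; eS 1 2]%nat)) by (apply (row_sub p M W S B [eW 1; eS 1 2]%nat (eW 0) (eS 1 0)); auto; try (vm_compute; reflexivity)).
  assert (h153 : ent p (Lmap W S [eW 0; eW 1; eS 1 0; eS 1 3]%nat) + ent p (Lmap W S [eW 1; eS 1 3]%nat) <= ent p (Lmap W S [eW 0; eW 1; eS 1 3]%nat) + ent p (Lmap W S [eW 1; eS 1 0; eS 1 3]%nat)) by (apply (row_sub p M W S B [eW 1; eS 1 3]%nat (eW 0) (eS 1 0)); auto; try (vm_compute; reflexivity)).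
  assert (h154 : ent p (Lmap W S [eW 1; eW 2; eS 1 0; eS 1 2]%nat) + ent p (Lmap W S [eW 1; eS 1 0]%nat) <= ent p (Lmap W S [eW 1; eW 2; eS 1 0]%nat) + ent p (Lmap W S [eW 1; eS 1 0; eS 1 2]%nat)) by (apply (row_sub p M W S B [eW 1; eS 1 0]%nat (eW 2) (eS 1 2)); auto; try (vm_compute; reflexivity)).
  assert (h155 : ent p (Lmap W S [eW 1; eW 2; eS 1 2; eS 1 3]%nat) + ent p (Lmap W S [eW 1; eS 1 3]%nat) <= ent p (Lmap W S [eW 1; eW 2; eS 1 3]%nat) + ent p (Lmap W S [eW 1; eS 1 2; eS 1 3]%nat)) by (apply (row_sub p M W S B [eW 1; eS 1 3]%nat (eW 2) (eS 1 2)); auto; try (vm_compute; reflexivity)).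
  assert (h156 : ent p (Lmap W S [eW 1; eW 3; eS 1 0; eS 1 3]%nat) + ent p (Lmap W S [eW 1; eS 1 0]%nat) <= ent p (Lmap W S [eW 1; eW 3; eS 1 0]%nat) + ent p (Lmap W S [eW 1; eS 1 0; eS 1 3]%nat)) by (apply (row_sub p M W S B [eW 1; eS 1 0]%nat (eW 3) (eS 1 3)); auto; try (vm_compute; reflexivity)).
  assert (h157 : ent p (Lmap W S [eW 1; eW 3; eS 1 2; eS 1 3]%nat) + ent p (Lmap W S [eW 1; eS 1 2]%nat) <= ent p (Lmap W S [eW 1; eW 3; eS 1 2]%nat) + ent p (Lmap W S [eW 1; eS 1 2; eS 1 3]%nat)) by (apply (row_sub p M W S B [eW 1; eS 1 2]%nat (eW 3) (eS 1 3)); auto; try (vm_compute; reflexivity)).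
  assert (h158 : ent p (Lmap W S [eW 0; eW 1; eW 2; eW 3; eW 4; eS 1 0; eS 1 2]%nat) + ent p (Lmap W S [eW 1; eW 2; eW 3; eW 4; eS 1 0]%nat) <= ent p (Lmap W S [eW 0; eW 1; eW 2; eW 3; eW 4; eS 1 0]%nat) + ent p (Lmap W S [eW 1; eW 2; eW 3; eW 4; eS 1 0; eS 1 2]%nat)) by (apply (row_sub p M W S B [eW 1; eW 2; eW 3; eW 4; eS 1 0]%nat (eW 0) (eS 1 2)); auto; try (vm_compute; reflexivity)).
  assert (h159 : ent p (Lmap W S [eW 0; eW 1; eW 2; eW 3; eW 4; eS 1 0; eS 1 3]%nat) + ent p (Lmap W S [eW 1; eW 2; eW 3; eW 4; eS 1 0]%nat) <= ent p (Lmap W S [eW 0; eW 1; eW 2; eW 3; eW 4; eS 1 0]%nat) + ent p (Lmap W S [eW 1; eW 2; eW 3; eW 4; eS 1 0; eS 1 3]%nat)) by (apply (row_sub p M W S B [eW 1; eW 2; eW 3; eW 4; eS 1 0]%nat (eW 0) (eS 1 3)); auto; try (vm_compute; reflexivity)).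
  assert (h160 : ent p (Lmap W S [eW 0; eW 1; eW 2; eW 3; eW 4; eS 1 0; eS 1 2]%nat) + ent p (Lmap W S [eW 0; eW 1; eW 3; eW 4; eS 1 2]%nat) <= ent p (Lmap W S [eW 0; eW 1; eW 2; eW 3; eW 4; eS 1 2]%nat) + ent p (Lmap W S [eW 0; eW 1; eW 3; eW 4; eS 1 0; eS 1 2]%nat)) by (apply (row_sub p M W S B [eW 0; eW 1; eW 3; eW 4; eS 1 2]%nat (eW 2) (eS 1 0)); auto; try (vm_compute; reflexivity)).
  assert (h161 : ent p (Lmap W S [eW 0; eW 1; eW 2; eW 3; eW 4; eS 1 2; eS 1 3]%nat) + ent p (Lmap W S [eW 0; eW 1; eW 3; eW 4; eS 1 2]%nat) <= ent p (Lmap W S [eW 0; eW 1; eW 2; eW 3; eW 4; eS 1 2]%nat) + ent p (Lmap W S [eW 0; eW 1; eW 3; eW 4; eS 1 2; eS 1 3]%nat)) by (apply (row_sub p M W S B [eW 0; eW 1; eW 3; eW 4; eS 1 2]%nat (eW 2) (eS 1 3)); auto; try (vm_compute; reflexivity)).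
  assert (h162 : ent p (Lmap W S [eW 0; eW 1; eW 2; eW 3; eW 4; eS 1 0; eS 1 3]%nat) + ent p (Lmap W S [eW 0; eW 1; eW 2; eW 4; eS 1 3]%nat) <= ent p (Lmap W S [eW 0; eW 1; eW 2; eW 3; eW 4; eS 1 3]%nat) + ent p (Lmap W S [eW 0; eW 1; eW 2; eW 4; eS 1 0; eS 1 3]%nat)) by (apply (row_sub p M W S B [eW 0; eW 1; eW 2; eW 4; eS 1 3]%nat (eW 3) (eS 1 0)); auto; try (vm_compute; reflexivity)).
  assert (h163 : ent p (Lmap W S [eW 0; eW 1; eW 2; eW 3; eW 4; eS 1 2; eS 1 3]%nat) + ent p (Lmap W S [eW 0; eW 1; eW 2; eW 4; eS 1 3]%nat) <= ent p (Lmap W S [eW 0; eW 1; eW 2; eW 3; eW 4; eS 1 3]%nat) + ent p (Lmap W S [eW 0; eW 1; eW 2; eW 4; eS 1 2; eS 1 3]%nat)) by (apply (row_sub p M W S B [eW 0; eW 1; eW 2; eW 4; eS 1 3]%nat (eW 3) (eS 1 2)); auto; try (vm_compute; reflexivity)).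
  assert (h164 : ent p (Lmap W S [eW 0; eW 2; eS 1 0; eS 1 2; eS 1 3]%nat) + ent p (Lmap W S [eW 0; eW 2; eS 1 3]%nat) <= ent p (Lmap W S [eW 0; eW 2; eS 1 0; eS 1 3]%nat) + ent p (Lmap W S [eW 0; eW 2; eS 1 2; eS 1 3]%nat)) by (apply (row_sub p M W S B [eW 0; eW 2; eS 1 3]%nat (eS 1 0) (eS 1 2)); auto; try (vm_compute; reflexivity)).
  assert (h165 : ent p (Lmap W S [eW 0; eW 3; eS 1 0; eS 1 2; eS 1 3]%nat) + ent p (Lmap W S [eW 0; eW 3; eS 1 2]%nat) <= ent p (Lmap W S [eW 0; eW 3; eS 1 0; eS 1 2]%nat) + ent p (Lmap W S [eW 0; eW 3; eS 1 2; eS 1 3]%nat)) by (apply (row_sub p M W S B [eW 0; eW 3; eS 1 2]%nat (eS 1 0) (eS 1 3)); auto; try (vm_compute; reflexivity)).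
  assert (h166 : ent p (Lmap W S [eW 2; eW 3; eS 1 0; eS 1 2; eS 1 3]%nat) + ent p (Lmap W S [eW 2; eW 3; eS 1 0]%nat) <= ent p (Lmap W S [eW 2; eW 3; eS 1 0; eS 1 2]%nat) + ent p (Lmap W S [eW 2; eW 3; eS 1 0; eS 1 3]%nat)) by (apply (row_sub p M W S B [eW 2; eW 3; eS 1 0]%nat (eS 1 2) (eS 1 3)); auto; try (vm_compute; reflexivity)).
  assert (h167 : ent p (Lmap W S [eW 0; eW 2; eW 3; eS 1 0; eS 1 2]%nat) + ent p (Lmap W S [eW 0; eW 2; eW 3]%nat) <= ent p (Lmap W S [eW 0; eW 2; eW 3; eS 1 0]%nat) + ent p (Lmap W S [eW 0; eW 2; eW 3; eS 1 2]%nat)) by (apply (row_sub p M W S B [eW 0; eW 2; eW 3]%nat (eS 1 0) (eS 1 2)); auto; try (vm_compute; reflexivity)).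
  assert (h168 : ent p (Lmap W S [eW 0; eW 2; eW 3; eS 1 0; eS 1 3]%nat) + ent p (Lmap W S [eW 0; eW 2; eW 3]%nat) <= ent p (Lmap W S [eW 0; eW 2; eW 3; eS 1 0]%nat) + ent p (Lmap W S [eW 0; eW 2; eW 3; eS 1 3]%nat)) by (apply (row_sub p M W S B [eW 0; eW 2; eW 3]%nat (eS 1 0) (eS 1 3)); auto; try (vm_compute; reflexivity)).
  assert (h169 : ent p (Lmap W S [eW 0; eW 2; eW 3; eS 1 2; eS 1 3]%nat) + ent p (Lmap W S [eW 0; eW 2; eW 3]%nat) <= ent p (Lmap W S [eW 0; eW 2; eW 3; eS 1 2]%nat) + ent p (Lmap W S [eW 0; eW 2; eW 3; eS 1 3]%nat)) by (apply (row_sub p M W S B [eW 0; eW 2; eW 3]%nat (eS 1 2) (eS 1 3)); auto; try (vm_compute; reflexivity)).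
  assert (h170 : ent p (Lmap W S [eW 0; eW 1; eS 1 0; eS 1 2; eS 1 3]%nat) + ent p (Lmap W S [eS 1 0; eS 1 2; eS 1 3]%nat) <= ent p (Lmap W S [eW 0; eS 1 0; eS 1 2; eS 1 3]%nat) + ent p (Lmap W S [eW 1; eS 1 0; eS 1 2; eS 1 3]%nat)) by (apply (row_sub p M W S B [eS 1 0; eS 1 2; eS 1 3]%nat (eW 0) (eW 1)); auto; try (vm_compute; reflexivity)).
  assert (h171 : ent p (Lmap W S [eW 1; eW 2; eS 1 0; eS 1 2; eS 1 3]%nat) + ent p (Lmap W S [eS 1 0; eS 1 2; eS 1 3]%nat) <= ent p (Lmap W S [eW 1; eS 1 0; eS 1 2; eS 1 3]%nat) + ent p (Lmap W S [eW 2; eS 1 0; eS 1 2; eS 1 3]%nat)) by (apply (row_sub p M W S B [eS 1 0; eS 1 2; eS 1 3]%nat (eW 1) (eW 2)); auto; try (vm_compute; reflexivity)).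
  assert (h172 : ent p (Lmap W S [eW 1; eW 3; eS 1 0; eS 1 2; eS 1 3]%nat) + ent p (Lmap W S [eS 1 0; eS 1 2; eS 1 3]%nat) <= ent p (Lmap W S [eW 1; eS 1 0; eS 1 2; eS 1 3]%nat) + ent p (Lmap W S [eW 3; eS 1 0; eS 1 2; eS 1 3]%nat)) by (apply (row_sub p M W S B [eS 1 0; eS 1 2; eS 1 3]%nat (eW 1) (eW 3)); auto; try (vm_compute; reflexivity)).
  assert (h173 : ent p (Lmap W S [eW 0; eW 1; eW 2; eW 3; eW 4]%nat) <= ent p (Lmap W S [eW 0; eW 1; eW 2; eW 3]%nat) + 0 * beta) by (apply (row_rep p M W S B beta _ _ (@nil el)); auto; try (vm_compute; reflexivity); try (simpl; lra)).
  assert (h174 : ent p (Lmap W S [eW 0; eW 1; eW 2; eW 3; eW 4; eS 1 0; eS 1 2; eS 1 3]%nat) + ent p (Lmap W S [eW 2; eW 3; eW 4; eS 1 0; eS 1 2; eS 1 3]%nat) <= ent p (Lmap W S [eW 0; eW 2; eW 3; eW 4; eS 1 0; eS 1 2; eS 1 3]%nat) + ent p (Lmap W S [eW 1; eW 2; eW 3; eW 4; eS 1 0; eS 1 2; eS 1 3]%nat)) by (apply (row_sub p M W S B [eW 2; eW 3; eW 4; eS 1 0; eS 1 2; eS 1 3]%nat (eW 0) (eW 1)); auto; try (vm_compute; reflexivity)).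
  assert (h175 : ent p (Lmap W S [eW 0; eW 1; eW 2; eW 3; eW 4; eS 1 0; eS 1 2; eS 1 3]%nat) + ent p (Lmap W S [eW 0; eW 3; eW 4; eS 1 0; eS 1 2; eS 1 3]%nat) <= ent p (Lmap W S [eW 0; eW 1; eW 3; eW 4; eS 1 0; eS 1 2; eS 1 3]%nat) + ent p (Lmap W S [eW 0; eW 2; eW 3; eW 4; eS 1 0; eS 1 2; eS 1 3]%nat)) by (apply (row_sub p M W S B [eW 0; eW 3; eW 4; eS 1 0; eS 1 2; eS 1 3]%nat (eW 1) (eW 2)); auto; try (vm_compute; reflexivity)).
  assert (h176 : ent p (Lmap W S [eW 0; eW 1; eW 2; eW 3; eW 4; eS 1 0; eS 1 2; eS 1 3]%nat) + ent p (Lmap W S [eW 0; eW 2; eW 4; eS 1 0; eS 1 2; eS 1 3]%nat) <= ent p (Lmap W S [eW 0; eW 1; eW 2; eW 4; eS 1 0; eS 1 2; eS 1 3]%nat) + ent p (Lmap W S [eW 0; eW 2; eW 3; eW 4; eS 1 0; eS 1 2; eS 1 3]%nat)) by (apply (row_sub p M W S B [eW 0; eW 2; eW 4; eS 1 0; eS 1 2; eS 1 3]%nat (eW 1) (eW 3)); auto; try (vm_compute; reflexivity)).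
  assert (h177 : ent p (Lmap W S [eW 0; eW 1; eW 2; eS 1 0; eS 1 2]%nat) + ent p (Lmap W S [eW 2; eS 1 0; eS 1 2]%nat) <= ent p (Lmap W S [eW 0; eW 2; eS 1 0; eS 1 2]%nat) + ent p (Lmap W S [eW 1; eW 2; eS 1 0; eS 1 2]%nat)) by (apply (row_sub p M W S B [eW 2; eS 1 0; eS 1 2]%nat (eW 0) (eW 1)); auto; try (vm_compute; reflexivity)).
  assert (h178 : ent p (Lmap W S [eW 0; eW 1; eW 3; eS 1 0; eS 1 3]%nat) + ent p (Lmap W S [eW 3; eS 1 0; eS 1 3]%nat) <= ent p (Lmap W S [eW 0; eW 3; eS 1 0; eS 1 3]%nat) + ent p (Lmap W S [eW 1; eW 3; eS 1 0; eS 1 3]%nat)) by (apply (row_sub p M W S B [eW 3; eS 1 0; eS 1 3]%nat (eW 0) (eW 1)); auto; try (vm_compute; reflexivity)).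
  assert (h179 : ent p (Lmap W S [eW 0; eW 1; eW 2; eS 1 0; eS 1 2]%nat) + ent p (Lmap W S [eW 0; eS 1 0; eS 1 2]%nat) <= ent p (Lmap W S [eW 0; eW 1; eS 1 0; eS 1 2]%nat) + ent p (Lmap W S [eW 0; eW 2; eS 1 0; eS 1 2]%nat)) by (apply (row_sub p M W S B [eW 0; eS 1 0; eS 1 2]%nat (eW 1) (eW 2)); auto; try (vm_compute; reflexivity)).
  assert (h180 : ent p (Lmap W S [eW 1; eW 2; eW 3; eS 1 2; eS 1 3]%nat) + ent p (Lmap W S [eW 3; eS 1 2; eS 1 3]%nat) <= ent p (Lmap W S [eW 1; eW 3; eS 1 2; eS 1 3]%nat) + ent p (Lmap W S [eW 2; eW 3; eS 1 2; eS 1 3]%nat)) by (apply (row_sub p M W S B [eW 3; eS 1 2; eS 1 3]%nat (eW 1) (eW 2)); auto; try (vm_compute; reflexivity)).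
  assert (h181 : ent p (Lmap W S [eW 0; eW 1; eW 3; eS 1 0; eS 1 3]%nat) + ent p (Lmap W S [eW 0; eS 1 0; eS 1 3]%nat) <= ent p (Lmap W S [eW 0; eW 1; eS 1 0; eS 1 3]%nat) + ent p (Lmap W S [eW 0; eW 3; eS 1 0; eS 1 3]%nat)) by (apply (row_sub p M W S B [eW 0; eS 1 0; eS 1 3]%nat (eW 1) (eW 3)); auto; try (vm_compute; reflexivity)).
  assert (h182 : ent p (Lmap W S [eW 1; eW 2; eW 3; eS 1 2; eS 1 3]%nat) + ent p (Lmap W S [eW 2; eS 1 2; eS 1 3]%nat) <= ent p (Lmap W S [eW 1; eW 2; eS 1 2; eS 1 3]%nat) + ent p (Lmap W S [eW 2; eW 3; eS 1 2; eS 1 3]%nat)) by (apply (row_sub p M W S B [eW 2; eS 1 2; eS 1 3]%nat (eW 1) (eW 3)); auto; try (vm_compute; reflexivity)).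
  assert (h183 : ent p (Lmap W S [eW 2; eW 3; eW 4; eS 1 0; eS 1 2; eS 1 3]%nat) + ent p (Lmap W S [eW 2; eW 3; eS 1 2; eS 1 3]%nat) <= ent p (Lmap W S [eW 2; eW 3; eW 4; eS 1 2; eS 1 3]%nat) + ent p (Lmap W S [eW 2; eW 3; eS 1 0; eS 1 2; eS 1 3]%nat)) by (apply (row_sub p M W S B [eW 2; eW 3; eS 1 2; eS 1 3]%nat (eW 4) (eS 1 0)); auto; try (vm_compute; reflexivity)).
  assert (h184 : ent p (Lmap W S [eW 0; eW 3; eW 4; eS 1 0; eS 1 2; eS 1 3]%nat) + ent p (Lmap W S [eW 0; eW 3; eS 1 0; eS 1 3]%nat) <= ent p (Lmap W S [eW 0; eW 3; eW 4; eS 1 0; eS 1 3]%nat) + ent p (Lmap W S [eW 0; eW 3; eS 1 0; eS 1 2; eS 1 3]%nat)) by (apply (row_sub p M W S B [eW 0; eW 3; eS 1 0; eS 1 3]%nat (eW 4) (eS 1 2)); auto; try (vm_compute; reflexivity)).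
  assert (h185 : ent p (Lmap W S [eW 0; eW 2; eW 4; eS 1 0; eS 1 2; eS 1 3]%nat) + ent p (Lmap W S [eW 0; eW 2; eS 1 0; eS 1 2]%nat) <= ent p (Lmap W S [eW 0; eW 2; eW 4; eS 1 0; eS 1 2]%nat) + ent p (Lmap W S [eW 0; eW 2; eS 1 0; eS 1 2; eS 1 3]%nat)) by (apply (row_sub p M W S B [eW 0; eW 2; eS 1 0; eS 1 2]%nat (eW 4) (eS 1 3)); auto; try (vm_compute; reflexivity)).
  assert (h186 : ent p (Lmap W S [eW 0; eW 2; eW 3; eW 4; eS 1 0; eS 1 2; eS 1 3]%nat) <= ent p (Lmap W S [eW 0; eW 1; eW 2; eW 3; eS 1 0; eS 1 2; eS 1 3]%nat) + 0 * beta) by (apply (row_rep p M W S B beta _ _ (@nil el)); auto; try (vm_compute; reflexivity); try (simpl; lra)).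
  assert (h187 : ent p (Lmap W S [eW 0; eW 1; eS 1 2]%nat) + ent p (Lmap W S [eW 1]%nat) <= ent p (Lmap W S [eW 0; eW 1]%nat) + ent p (Lmap W S [eW 1; eS 1 2]%nat)) by (apply (row_sub p M W S B [eW 1]%nat (eW 0) (eS 1 2)); auto; try (vm_compute; reflexivity)).
  assert (h188 : ent p (Lmap W S [eW 0; eW 1; eS 1 3]%nat) + ent p (Lmap W S [eW 1]%nat) <= ent p (Lmap W S [eW 0; eW 1]%nat) + ent p (Lmap W S [eW 1; eS 1 3]%nat)) by (apply (row_sub p M W S B [eW 1]%nat (eW 0) (eS 1 3)); auto; try (vm_compute; reflexivity)).
  assert (h189 : ent p (Lmap W S [eW 1; eW 2; eS 1 0]%nat) + ent p (Lmap W S [eW 1]%nat) <= ent p (Lmap W S [eW 1; eW 2]%nat) + ent p (Lmap W S [eW 1; eS 1 0]%nat)) by (apply (row_sub p M W S B [eW 1]%nat (eW 2) (eS 1 0)); auto; try (vm_compute; reflexivity)).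
  assert (h190 : ent p (Lmap W S [eW 1; eW 2; eS 1 3]%nat) + ent p (Lmap W S [eW 1]%nat) <= ent p (Lmap W S [eW 1; eW 2]%nat) + ent p (Lmap W S [eW 1; eS 1 3]%nat)) by (apply (row_sub p M W S B [eW 1]%nat (eW 2) (eS 1 3)); auto; try (vm_compute; reflexivity)).
  assert (h191 : ent p (Lmap W S [eW 1; eW 3; eS 1 0]%nat) + ent p (Lmap W S [eW 1]%nat) <= ent p (Lmap W S [eW 1; eW 3]%nat) + ent p (Lmap W S [eW 1; eS 1 0]%nat)) by (apply (row_sub p M W S B [eW 1]%nat (eW 3) (eS 1 0)); auto; try (vm_compute; reflexivity)).
  assert (h192 : ent p (Lmap W S [eW 1; eW 3; eS 1 2]%nat) + ent p (Lmap W S [eW 1]%nat) <= ent p (Lmap W S [eW 1; eW 3]%nat) + ent p (Lmap W S [eW 1; eS 1 2]%nat)) by (apply (row_sub p M W S B [eW 1]%nat (eW 3) (eS 1 2)); auto; try (vm_compute; reflexivity)).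
  assert (h193 : ent p (Lmap W S [eW 0; eW 1; eW 2; eW 3; eS 1 0; eS 1 2; eS 1 3]%nat) + ent p (Lmap W S [eW 2; eW 3; eS 1 0; eS 1 2; eS 1 3]%nat) <= ent p (Lmap W S [eW 0; eW 2; eW 3; eS 1 0; eS 1 2; eS 1 3]%nat) + ent p (Lmap W S [eW 1; eW 2; eW 3; eS 1 0; eS 1 2; eS 1 3]%nat)) by (apply (row_sub p M W S B [eW 2; eW 3; eS 1 0; eS 1 2; eS 1 3]%nat (eW 0) (eW 1)); auto; try (vm_compute; reflexivity)).
  assert (h194 : ent p (Lmap W S [eW 0; eW 1; eW 2; eW 3; eS 1 0; eS 1 2; eS 1 3]%nat) + ent p (Lmap W S [eW 0; eW 3; eS 1 0; eS 1 2; eS 1 3]%nat) <= ent p (Lmap W S [eW 0; eW 1; eW 3; eS 1 0; eS 1 2; eS 1 3]%nat) + ent p (Lmap W S [eW 0; eW 2; eW 3; eS 1 0; eS 1 2; eS 1 3]%nat)) by (apply (row_sub p M W S B [eW 0; eW 3; eS 1 0; eS 1 2; eS 1 3]%nat (eW 1) (eW 2)); auto; try (vm_compute; reflexivity)).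
  assert (h195 : ent p (Lmap W S [eW 0; eW 1; eW 2; eW 3; eS 1 0; eS 1 2; eS 1 3]%nat) + ent p (Lmap W S [eW 0; eW 2; eS 1 0; eS 1 2; eS 1 3]%nat) <= ent p (Lmap W S [eW 0; eW 1; eW 2; eS 1 0; eS 1 2; eS 1 3]%nat) + ent p (Lmap W S [eW 0; eW 2; eW 3; eS 1 0; eS 1 2; eS 1 3]%nat)) by (apply (row_sub p M W S B [eW 0; eW 2; eS 1 0; eS 1 2; eS 1 3]%nat (eW 1) (eW 3)); auto; try (vm_compute; reflexivity)).
  assert (h196 : ent p (Lmap W S [eW 0; eW 3; eS 1 0; eS 1 2]%nat) <= ent p (Lmap W S [eW 3; eS 1 0; eS 1 2]%nat) + 2 * beta) by (apply (row_rep p M W S B beta _ _ [eS 2 0; eS 4 0]%nat); auto; try (vm_compute; reflexivity); try (simpl; lra)).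
  assert (h197 : ent p (Lmap W S [eW 0; eW 2; eS 1 0; eS 1 3]%nat) <= ent p (Lmap W S [eW 2; eS 1 0; eS 1 3]%nat) + 2 * beta) by (apply (row_rep p M W S B beta _ _ [eS 3 0; eS 4 0]%nat); auto; try (vm_compute; reflexivity); try (simpl; lra)).
  assert (h198 : ent p (Lmap W S [eW 2; eW 3; eS 1 0; eS 1 2]%nat) <= ent p (Lmap W S [eW 3; eS 1 0; eS 1 2]%nat) + 2 * beta) by (apply (row_rep p M W S B beta _ _ [eS 0 2; eS 4 2]%nat); auto; try (vm_compute; reflexivity); try (simpl; lra)).
  assert (h199 : ent p (Lmap W S [eW 0; eW 2; eS 1 2; eS 1 3]%nat) <= ent p (Lmap W S [eW 0; eS 1 2; eS 1 3]%nat) + 2 * beta) by (apply (row_rep p M W S B beta _ _ [eS 3 2; eS 4 2]%nat); auto; try (vm_compute; reflexivity); try (simpl; lra)).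
  assert (h200 : ent p (Lmap W S [eW 2; eW 3; eS 1 0; eS 1 3]%nat) <= ent p (Lmap W S [eW 2; eS 1 0; eS 1 3]%nat) + 2 * beta) by (apply (row_rep p M W S B beta _ _ [eS 0 3; eS 4 3]%nat); auto; try (vm_compute; reflexivity); try (simpl; lra)).
  assert (h201 : ent p (Lmap W S [eW 0; eW 3; eS 1 2; eS 1 3]%nat) <= ent p (Lmap W S [eW 0; eS 1 2; eS 1 3]%nat) + 2 * beta) by (apply (row_rep p M W S B beta _ _ [eS 2 3; eS 4 3]%nat); auto; try (vm_compute; reflexivity); try (simpl; lra)).
  assert (h202 : ent p (Lmap W S [eW 0; eW 2; eW 3; eS 1 0; eS 1 2; eS 1 3]%nat) + ent p (Lmap W S [eW 0; eW 2; eW 3; eS 1 3]%nat) <= ent p (Lmap W S [eW 0; eW 2; eW 3; eS 1 0; eS 1 3]%nat) + ent p (Lmap W S [eW 0; eW 2; eW 3; eS 1 2; eS 1 3]%nat)) by (apply (row_sub p M W S B [eW 0; eW 2; eW 3; eS 1 3]%nat (eS 1 0) (eS 1 2)); auto; try (vm_compute; reflexivity)).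
  assert (h203 : ent p (Lmap W S [eW 0; eW 2; eW 3; eS 1 0; eS 1 2; eS 1 3]%nat) + ent p (Lmap W S [eW 0; eW 2; eW 3; eS 1 2]%nat) <= ent p (Lmap W S [eW 0; eW 2; eW 3; eS 1 0; eS 1 2]%nat) + ent p (Lmap W S [eW 0; eW 2; eW 3; eS 1 2; eS 1 3]%nat)) by (apply (row_sub p M W S B [eW 0; eW 2; eW 3; eS 1 2]%nat (eS 1 0) (eS 1 3)); auto; try (vm_compute; reflexivity)).
  assert (h204 : ent p (Lmap W S [eW 0; eW 2; eW 3; eS 1 0; eS 1 2; eS 1 3]%nat) + ent p (Lmap W S [eW 0; eW 2; eW 3; eS 1 0]%nat) <= ent p (Lmap W S [eW 0; eW 2; eW 3; eS 1 0; eS 1 2]%nat) + ent p (Lmap W S [eW 0; eW 2; eW 3; eS 1 0; eS 1 3]%nat)) by (apply (row_sub p M W S B [eW 0; eW 2; eW 3; eS 1 0]%nat (eS 1 2) (eS 1 3)); auto; try (vm_compute; reflexivity)).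
  assert (hB : ent p (Lmap W S [eW 0; eW 1; eW 2; eW 3; eW 4; eS 1 0; eS 1 2; eS 1 3]%nat) = B) by (rewrite (ent_full p M W S); [apply ent_of; auto|auto|vm_compute; reflexivity..]).
  lra.
Qed.
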